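(* Let $\pi:\mathcal{A}(\mathbb{C}P^2_q)\to\mathcal{B}(\mathcal{H})$ be a $*$-representation by bounded operators on a Hilbert space with $\ker\pi(p_{11})=\{0\}$. Then there exist bounded operators $Z_1,Z_2,Z_3$ on $\mathcal{H}$ with $Z_1$ positive and $\ker Z_1=\{0\}$ such that $$\big(\pi(p_{ij})\big)_{i,j}=\begin{pmatrix}Z_1^2&qZ_2Z_1&qZ_3Z_1\\ qZ_1Z_2^*&Z_2^*Z_2&Z_2^*Z_3\\ qZ_1Z_3^*&Z_3^*Z_2&Z_3^*Z_3\end{pmatrix},$$ the assignment $\tilde\pi(z_i):=Z_i$ extends to a $*$-representation $\tilde\pi:\mathcal{A}(S^5_q)\to\mathcal{B}(\mathcal{H})$, $\tilde\pi(z_i^*z_j)=\pi(p_{ij})$ for all $i,j$ (so $\tilde\pi$ restricts to $\pi$ on $\mathcal{A}(\mathbb{C}P^2_q)$), and $\tilde\pi$ is irreducible whenever $\pi$ is irreducible.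
   Context: Fix $0<q<1$. $\mathcal{A}(S^5_q)$ is the unital $*$-algebra generated by $z_1,z_2,z_3$ and adjoints with relations $z_iz_j=qz_jz_i$ ($i<j$), $z_i^*z_j=qz_jz_i^*$ ($i\ne j$), $[z_1^*,z_1]=0$, $[z_2^*,z_2]=(1-q^2)z_1z_1^*$, $[z_3^*,z_3]=(1-q^2)(z_1z_1^*+z_2z_2^* )$, $z_1z_1^*+z_2z_2^*+z_3z_3^*=1$. $\mathcal{A}(\mathbb{C}P^2_q)$ is the unital $*$-subalgebra generated by $p_{ij}:=z_i^*z_j$, $i,j=1,2,3$. Representations are unital $*$-representations. *)

(* Defs.v *)
From Stdlib Require Import Reals ClassicalEpsilon.
Open Scope R_scope.

Record C := mkC { Re : R; Im : R }.
Definition C0 : C := mkC 0 0.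
Definition C1 : C := mkC 1 0.
Definition RtoC (r : R) : C := mkC r 0.
Definition Cadd (a b : C) : C := mkC (Re a + Re b) (Im a + Im b).
Definition Cmul (a b : C) : C :=
  mkC (Re a * Re b - Im a * Im b) (Re a * Im b + Im a * Re b).
Definition Cconj (a : C) : C := mkC (Re a) (- Im a).

(* inner product linear in the first, conjugate-linear in the second argument *)
Record Hilbert := {
  carrier :> Type;
  vzero : carrier;
  vadd : carrier -> carrier -> carrier;
  vopp : carrier -> carrier;
  vscal : C -> carrier -> carrier;
  inner : carrier -> carrier -> C;
  vadd_assoc : forall x y z, vadd x (vadd y z) = vadd (vadd x y) z;
  vadd_comm : forall x y, vadd x y = vadd y x;
  vadd_0 : forall x, vadd vzero x = x;
  vadd_opp : forall x, vadd x (vopp x) = vzero;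
  vscal_1 : forall x, vscal C1 x = x;
  vscal_assoc : forall a b x, vscal a (vscal b x) = vscal (Cmul a b) x;
  vscal_distr_v : forall a x y, vscal a (vadd x y) = vadd (vscal a x) (vscal a y);
  vscal_distr_c : forall a b x, vscal (Cadd a b) x = vadd (vscal a x) (vscal b x);
  inner_add_l : forall x y z, inner (vadd x y) z = Cadd (inner x z) (inner y z);
  inner_scal_l : forall a x y, inner (vscal a x) y = Cmul a (inner x y);
  inner_sym : forall x y, inner y x = Cconj (inner x y);
  inner_pos : forall x, 0 <= Re (inner x x);
  inner_def : forall x, inner x x = C0 -> x = vzero;
  complete : forall u : nat -> carrier,
    (forall eps, eps > 0 -> exists N, forall n m, (n >= N)%nat -> (m >= N)%nat ->
       sqrt (Re (inner (vadd (u n) (vopp (u m))) (vadd (u n) (vopp (u m))))) < eps) ->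
    exists l, forall eps, eps > 0 -> exists N, forall n, (n >= N)%nat ->
       sqrt (Re (inner (vadd (u n) (vopp l)) (vadd (u n) (vopp l)))) < eps
}.

Arguments vzero {h}.
Arguments vadd {h}.
Arguments vopp {h}.
Arguments vscal {h}.
Arguments inner {h}.

Definition norm {H : Hilbert} (x : H) : R := sqrt (Re (inner x x)).

Definition converges {H : Hilbert} (u : nat -> H) (l : H) : Prop :=
  forall eps, eps > 0 -> exists N, forall n, (n >= N)%nat ->
    norm (vadd (u n) (vopp l)) < eps.

Definition op (H : Hilbert) := H -> H.

Definition linear_op {H : Hilbert} (T : op H) : Prop :=
  (forall x y, T (vadd x y) = vadd (T x) (T y)) /\
  (forall a x, T (vscal a x) = vscal a (T x)).

Definition bounded_op {H : Hilbert} (T : op H) : Prop :=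
  linear_op T /\ exists M, forall x, norm (T x) <= M * norm x.

(* the Hilbert-space adjoint (unique when it exists, which it does for bounded T) *)
Definition adjoint {H : Hilbert} (T : op H) : op H :=
  epsilon (inhabits T) (fun S => forall x y, inner (T x) y = inner x (S y)).

Definition positive_op {H : Hilbert} (T : op H) : Prop :=
  (forall x y, inner (T x) y = inner x (T y)) /\ (forall x, 0 <= Re (inner (T x) x)).

Definition trivial_kernel {H : Hilbert} (T : op H) : Prop :=
  forall x, T x = vzero -> x = vzero.

Definition closed_subspace {H : Hilbert} (M : H -> Prop) : Prop :=
  M vzero /\ (forall x y, M x -> M y -> M (vadd x y)) /\
  (forall a x, M x -> M (vscal a x)) /\
  (forall u l, (forall n, M (u n)) -> converges u l -> M l).

Inductive term (G : Type) : Type :=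
| tGen : G -> term G
| tZero : term G
| tOne : term G
| tAdd : term G -> term G -> term G
| tMul : term G -> term G -> term G
| tScal : C -> term G -> term G
| tStar : term G -> term G.
Arguments tGen {G}. Arguments tZero {G}. Arguments tOne {G}. Arguments tAdd {G}.
Arguments tMul {G}. Arguments tScal {G}. Arguments tStar {G}.

(* equality in the unital *-algebra over C presented by the relations rel *)
Inductive aeq {G : Type} (rel : term G -> term G -> Prop) : term G -> term G -> Prop :=
| aeq_rel : forall a b, rel a b -> aeq rel a b
| aeq_refl : forall a, aeq rel a a
| aeq_sym : forall a b, aeq rel a b -> aeq rel b a
| aeq_trans : forall a b c, aeq rel a b -> aeq rel b c -> aeq rel a c
| aeq_add : forall a a' b b', aeq rel a a' -> aeq rel b b' -> aeq rel (tAdd a b) (tAdd a' b')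
| aeq_mul : forall a a' b b', aeq rel a a' -> aeq rel b b' -> aeq rel (tMul a b) (tMul a' b')
| aeq_scal : forall c a a', aeq rel a a' -> aeq rel (tScal c a) (tScal c a')
| aeq_star : forall a a', aeq rel a a' -> aeq rel (tStar a) (tStar a')
| ax_add_assoc : forall a b c, aeq rel (tAdd a (tAdd b c)) (tAdd (tAdd a b) c)
| ax_add_comm : forall a b, aeq rel (tAdd a b) (tAdd b a)
| ax_add_0 : forall a, aeq rel (tAdd tZero a) a
| ax_add_opp : forall a, aeq rel (tAdd a (tScal (RtoC (-1)) a)) tZero
| ax_mul_assoc : forall a b c, aeq rel (tMul a (tMul b c)) (tMul (tMul a b) c)
| ax_mul_1l : forall a, aeq rel (tMul tOne a) a
| ax_mul_1r : forall a, aeq rel (tMul a tOne) a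
| ax_mul_addl : forall a b c, aeq rel (tMul (tAdd a b) c) (tAdd (tMul a c) (tMul b c))
| ax_mul_addr : forall a b c, aeq rel (tMul a (tAdd b c)) (tAdd (tMul a b) (tMul a c))
| ax_scal_1 : forall a, aeq rel (tScal C1 a) a
| ax_scal_assoc : forall c d a, aeq rel (tScal c (tScal d a)) (tScal (Cmul c d) a)
| ax_scal_addv : forall c a b, aeq rel (tScal c (tAdd a b)) (tAdd (tScal c a) (tScal c b))
| ax_scal_addc : forall c d a, aeq rel (tScal (Cadd c d) a) (tAdd (tScal c a) (tScal d a))
| ax_scal_mull : forall c a b, aeq rel (tMul (tScal c a) b) (tScal c (tMul a b))
| ax_scal_mulr : forall c a b, aeq rel (tMul a (tScal c b)) (tScal c (tMul a b))
| ax_star_inv : forall a, aeq rel (tStar (tStar a)) a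
| ax_star_add : forall a b, aeq rel (tStar (tAdd a b)) (tAdd (tStar a) (tStar b))
| ax_star_mul : forall a b, aeq rel (tStar (tMul a b)) (tMul (tStar b) (tStar a))
| ax_star_scal : forall c a, aeq rel (tStar (tScal c a)) (tScal (Cconj c) (tStar a))
| ax_star_one : aeq rel (tStar tOne) tOne.

Fixpoint eval {G : Type} {H : Hilbert} (v : G -> op H) (t : term G) : op H :=
  match t with
  | tGen g => v g
  | tZero => fun _ => vzero
  | tOne => fun x => x
  | tAdd a b => fun x => vadd (eval v a x) (eval v b x)
  | tMul a b => fun x => eval v a (eval v b x)
  | tScal c a => fun x => vscal c (eval v a x)
  | tStar a => adjoint (eval v a)
  end.

Inductive idx := I1 | I2 | I3.

Definition idx_lt (i j : idx) : Prop :=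
  match i, j with
  | I1, I2 | I1, I3 | I2, I3 => True
  | _, _ => False
  end.

Definition z (i : idx) : term idx := tGen i.

Inductive s5rel (q : R) : term idx -> term idx -> Prop :=
| s5_comm : forall i j, idx_lt i j ->
    s5rel q (tMul (z i) (z j)) (tScal (RtoC q) (tMul (z j) (z i)))
| s5_star : forall i j, i <> j ->
    s5rel q (tMul (tStar (z i)) (z j)) (tScal (RtoC q) (tMul (z j) (tStar (z i))))
| s5_c1 : s5rel q (tMul (tStar (z I1)) (z I1)) (tMul (z I1) (tStar (z I1)))
| s5_c2 : s5rel q (tMul (tStar (z I2)) (z I2))
    (tAdd (tMul (z I2) (tStar (z I2))) (tScal (RtoC (1 - q ^ 2)) (tMul (z I1) (tStar (z I1)))))
| s5_c3 : s5rel q (tMul (tStar (z I3)) (z I3))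
    (tAdd (tMul (z I3) (tStar (z I3)))
       (tScal (RtoC (1 - q ^ 2))
          (tAdd (tMul (z I1) (tStar (z I1))) (tMul (z I2) (tStar (z I2))))))
| s5_sphere : s5rel q
    (tAdd (tAdd (tMul (z I1) (tStar (z I1))) (tMul (z I2) (tStar (z I2))))
          (tMul (z I3) (tStar (z I3)))) tOne.

Definition S5_rep (q : R) (H : Hilbert) (Z : idx -> op H) : Prop :=
  (forall i, bounded_op (Z i)) /\
  (forall f g, aeq (s5rel q) f g -> eval Z f = eval Z g).

Fixpoint cp2_emb (t : term (idx * idx)) : term idx :=
  match t with
  | tGen (i, j) => tMul (tStar (z i)) (z j)
  | tZero => tZero
  | tOne => tOne
  | tAdd a b => tAdd (cp2_emb a) (cp2_emb b)
  | tMul a b => tMul (cp2_emb a) (cp2_emb b)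
  | tScal c a => tScal c (cp2_emb a)
  | tStar a => tStar (cp2_emb a)
  end.

Definition pvals {H : Hilbert} (P : idx -> idx -> op H) : idx * idx -> op H :=
  fun ij => P (fst ij) (snd ij).

(* *-representation pi of A(CP^2_q) with pi(p_ij) = P i j: each element of
   A(CP^2_q) is a *-polynomial f in the p_ij; pi(f) := eval f, which must be
   well defined, i.e. depend only on the element cp2_emb f of A(S^5_q). *)
Definition CP2_rep (q : R) (H : Hilbert) (P : idx -> idx -> op H) : Prop :=
  (forall i j, bounded_op (P i j)) /\
  (forall f g, aeq (s5rel q) (cp2_emb f) (cp2_emb g) -> eval (pvals P) f = eval (pvals P) g).

Definition irreducible_family {H : Hilbert} (A : op H -> Prop) : Prop :=
  (exists x : H, x <> vzero) /\
  forall M : H -> Prop, closed_subspace M ->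
    (forall T x, A T -> M x -> M (T x)) ->
    (forall x, M x -> x = vzero) \/ (forall x, M x).

Definition CP2_irreducible {H : Hilbert} (P : idx -> idx -> op H) : Prop :=
  irreducible_family (fun T => exists f, T = eval (pvals P) f).

Definition S5_irreducible {H : Hilbert} (Z : idx -> op H) : Prop :=
  irreducible_family (fun T => exists f, T = eval Z f).

Definition ocomp {H : Hilbert} (S T : op H) : op H := fun x => S (T x).
Definition qscal {H : Hilbert} (q : R) (T : op H) : op H := fun x => vscal (RtoC q) (T x).

(* Main.v *)
Require Import Defs.
From Stdlib Require Import Reals.
From Stdlib Require Import Lra Psatz FunctionalExtensionality ClassicalEpsilon Classical ZArith Arith Setoid Morphisms.
Import Defs.
Open Scope R_scope.

Arguments vadd_assoc {h}. Arguments vadd_comm {h}. Arguments vadd_0 {h}. Arguments vadd_opp {h}.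
Arguments vscal_1 {h}. Arguments vscal_assoc {h}. Arguments vscal_distr_v {h}. Arguments vscal_distr_c {h}.
Arguments inner_add_l {h}. Arguments inner_scal_l {h}. Arguments inner_sym {h}. Arguments inner_pos {h}.
Arguments inner_def {h}. Arguments complete {h}.

Lemma C_ext (a b : C) : Re a = Re b -> Im a = Im b -> a = b.
Proof. destruct a, b; simpl; intros; subst; reflexivity. Qed.

Ltac Ceq := apply C_ext; simpl; try ring; try lra.

Definition Ci : C := mkC 0 1.

Lemma Cmul_RtoC a b : Cmul (RtoC a) (RtoC b) = RtoC (a*b).
Proof. Ceq. Qed.
Lemma Cadd_RtoC a b : Cadd (RtoC a) (RtoC b) = RtoC (a+b).
Proof. Ceq. Qed.
Lemma Cconj_RtoC a : Cconj (RtoC a) = RtoC a.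
Proof. Ceq. Qed.
Lemma RtoC_1 : RtoC 1 = C1. Proof. Ceq. Qed.
Lemma RtoC_0 : RtoC 0 = C0. Proof. Ceq. Qed.

Definition vsub {H : Hilbert} (x y : H) : H := vadd x (vopp y).

Lemma vadd_0r {H : Hilbert} (x : H) : vadd x vzero = x.
Proof. rewrite vadd_comm; apply vadd_0. Qed.

Lemma vadd_cancel_l {H : Hilbert} (a b c : H) : vadd a b = vadd a c -> b = c.
Proof.
  intros E. assert (E2 : vadd (vopp a) (vadd a b) = vadd (vopp a) (vadd a c)) by (rewrite E; auto).
  rewrite !vadd_assoc in E2. rewrite (vadd_comm (vopp a) a), vadd_opp, !vadd_0 in E2. exact E2.
Qed.

Lemma vscal_C0 {H : Hilbert} (x : H) : vscal C0 x = vzero.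
Proof.
  apply (vadd_cancel_l (vscal C0 x)). rewrite vadd_0r, <- vscal_distr_c.
  f_equal. Ceq.
Qed.

Lemma vscal_0 {H : Hilbert} (a : C) : vscal a (@vzero H) = vzero.
Proof.
  rewrite <- (vscal_C0 vzero), vscal_assoc. rewrite vscal_C0.
  replace (Cmul a C0) with C0 by Ceq. apply vscal_C0.
Qed.

Lemma vopp_scal {H : Hilbert} (x : H) : vopp x = vscal (RtoC (-1)) x.
Proof.
  apply (vadd_cancel_l x). rewrite vadd_opp.
  transitivity (vadd (vscal C1 x) (vscal (RtoC (-1)) x)); [| rewrite vscal_1; reflexivity].
  rewrite <- vscal_distr_c.
  replace (Cadd C1 (RtoC (-1))) with C0 by Ceq. rewrite vscal_C0; reflexivity.
Qed.

Lemma vadd_opp_l {H : Hilbert} (x : H) : vadd (vopp x) x = vzero.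
Proof. rewrite vadd_comm; apply vadd_opp. Qed.

Lemma vopp_opp {H : Hilbert} (x : H) : vopp (vopp x) = x.
Proof. rewrite !vopp_scal, vscal_assoc. replace (Cmul (RtoC (-1)) (RtoC (-1))) with C1 by Ceq. apply vscal_1. Qed.

Lemma vopp_add {H : Hilbert} (x y : H) : vopp (vadd x y) = vadd (vopp x) (vopp y).
Proof. rewrite !vopp_scal. apply vscal_distr_v. Qed.

Lemma vopp_zero {H : Hilbert} : vopp (@vzero H) = vzero.
Proof. rewrite vopp_scal; apply vscal_0. Qed.

Lemma vsub_eq0 {H : Hilbert} (x y : H) : vsub x y = vzero -> x = y.
Proof.
  unfold vsub; intros E. assert (E2 : vadd (vadd x (vopp y)) y = vadd vzero y) by (rewrite E; auto).
  rewrite <- vadd_assoc, vadd_opp_l, vadd_0r, vadd_0 in E2. exact E2.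
Qed.

Lemma vsub_self {H : Hilbert} (x : H) : vsub x x = vzero.
Proof. apply vadd_opp. Qed.

Lemma vscal_opp {H : Hilbert} a (x : H) : vscal a (vopp x) = vopp (vscal a x).
Proof. rewrite !vopp_scal, !vscal_assoc. f_equal. Ceq. Qed.

Lemma Cconj_add a b : Cconj (Cadd a b) = Cadd (Cconj a) (Cconj b).
Proof. Ceq. Qed.
Lemma Cconj_mul a b : Cconj (Cmul a b) = Cmul (Cconj a) (Cconj b).
Proof. Ceq. Qed.
Lemma Cconj_conj a : Cconj (Cconj a) = a.
Proof. Ceq. Qed.

Lemma inner_add_r {H : Hilbert} (x y z : H) : inner x (vadd y z) = Cadd (inner x y) (inner x z).
Proof. rewrite inner_sym, inner_add_l, Cconj_add, <- !inner_sym. reflexivity. Qed.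

Lemma inner_scal_r {H : Hilbert} a (x y : H) : inner x (vscal a y) = Cmul (Cconj a) (inner x y).
Proof. rewrite inner_sym, inner_scal_l, Cconj_mul, <- inner_sym. reflexivity. Qed.

Lemma inner_0_l {H : Hilbert} (y : H) : inner vzero y = C0.
Proof. rewrite <- (vscal_C0 vzero), inner_scal_l. Ceq. Qed.

Lemma inner_0_r {H : Hilbert} (y : H) : inner y vzero = C0.
Proof. rewrite inner_sym, inner_0_l. Ceq. Qed.

Lemma inner_opp_l {H : Hilbert} (x y : H) : inner (vopp x) y = Cmul (RtoC (-1)) (inner x y).
Proof. rewrite vopp_scal, inner_scal_l. reflexivity. Qed.
Lemma inner_opp_r {H : Hilbert} (x y : H) : inner x (vopp y) = Cmul (RtoC (-1)) (inner x y).
Proof. rewrite vopp_scal, inner_scal_r, Cconj_RtoC. reflexivity. Qed.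

Lemma inner_self_im {H : Hilbert} (x : H) : Im (inner x x) = 0.
Proof.
  pose proof (inner_sym x x) as E. destruct (inner x x) as [a b]. unfold Cconj in E; simpl in *.
  injection E; intros; lra.
Qed.

Lemma inner_zero_all {H : Hilbert} (x : H) : (forall y, inner x y = C0) -> x = vzero.
Proof. intros Hy. apply inner_def. apply Hy. Qed.

Lemma inner_ext_r {H : Hilbert} (x x' : H) : (forall y, inner x y = inner x' y) -> x = x'.
Proof.
  intros Hy. apply vsub_eq0. apply inner_zero_all. intros y. unfold vsub.
  rewrite inner_add_l, inner_opp_l, Hy. Ceq.
Qed.

Lemma inner_ext_l {H : Hilbert} (x x' : H) : (forall y, inner y x = inner y x') -> x = x'.
Proof.
  intros Hy. apply inner_ext_r. intros y. rewrite (inner_sym y x), (inner_sym y x'), Hy. reflexivity.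
Qed.

Definition nsq {H : Hilbert} (x : H) : R := Re (inner x x).
Definition rip {H : Hilbert} (x y : H) : R := Re (inner x y).

Lemma nsq_nonneg {H : Hilbert} (x : H) : 0 <= nsq x.
Proof. apply inner_pos. Qed.

Lemma rip_sym {H : Hilbert} (x y : H) : rip x y = rip y x.
Proof. unfold rip. rewrite (inner_sym x y). reflexivity. Qed.

Lemma rip_add_l {H : Hilbert} (x y z : H) : rip (vadd x y) z = rip x z + rip y z.
Proof. unfold rip. rewrite inner_add_l. reflexivity. Qed.
Lemma rip_add_r {H : Hilbert} (x y z : H) : rip z (vadd x y) = rip z x + rip z y.
Proof. unfold rip. rewrite inner_add_r. reflexivity. Qed.
Lemma rip_scal_l {H : Hilbert} r (x y : H) : rip (vscal (RtoC r) x) y = r * rip x y.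
Proof. unfold rip. rewrite inner_scal_l. simpl. ring. Qed.
Lemma rip_scal_r {H : Hilbert} r (x y : H) : rip y (vscal (RtoC r) x) = r * rip y x.
Proof. unfold rip. rewrite inner_scal_r. simpl. ring. Qed.
Lemma rip_opp_l {H : Hilbert} (x y : H) : rip (vopp x) y = - rip x y.
Proof. rewrite vopp_scal, rip_scal_l. ring. Qed.
Lemma rip_opp_r {H : Hilbert} (x y : H) : rip y (vopp x) = - rip y x.
Proof. rewrite vopp_scal, rip_scal_r. ring. Qed.
Lemma rip_self {H : Hilbert} (x : H) : rip x x = nsq x.
Proof. reflexivity. Qed.

Lemma nsq_add {H : Hilbert} (x y : H) : nsq (vadd x y) = nsq x + 2 * rip x y + nsq y.
Proof.
  rewrite <- !rip_self. rewrite rip_add_l, !rip_add_r. rewrite (rip_sym y x). ring.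
Qed.
Lemma nsq_sub {H : Hilbert} (x y : H) : nsq (vsub x y) = nsq x - 2 * rip x y + nsq y.
Proof.
  unfold vsub. rewrite nsq_add. rewrite rip_opp_r. rewrite <- !rip_self, rip_opp_l, rip_opp_r. ring.
Qed.
Lemma nsq_scal {H : Hilbert} r (x : H) : nsq (vscal (RtoC r) x) = r * r * nsq x.
Proof. rewrite <- !rip_self, rip_scal_l, rip_scal_r. ring. Qed.
Lemma nsq_opp {H : Hilbert} (x : H) : nsq (vopp x) = nsq x.
Proof. rewrite <- !rip_self, rip_opp_l, rip_opp_r. ring. Qed.
Lemma nsq_zero {H : Hilbert} : nsq (@vzero H) = 0.
Proof. unfold nsq. rewrite inner_0_l. reflexivity. Qed.

Lemma nsq_eq0 {H : Hilbert} (x : H) : nsq x = 0 -> x = vzero.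
Proof.
  intros E. apply inner_def. apply C_ext; simpl. exact E. apply inner_self_im.
Qed.

Lemma rip_Ci_r {H : Hilbert} (x y : H) : rip x (vscal Ci y) = Im (inner x y).
Proof. unfold rip. rewrite inner_scal_r. simpl. ring. Qed.

Lemma norm_sq {H : Hilbert} (x : H) : norm x * norm x = nsq x.
Proof. unfold norm. apply sqrt_sqrt. apply inner_pos. Qed.
Lemma norm_nonneg {H : Hilbert} (x : H) : 0 <= norm x.
Proof. unfold norm. apply sqrt_pos. Qed.
Lemma norm_zero {H : Hilbert} : norm (@vzero H) = 0.
Proof. unfold norm. fold (nsq (@vzero H)). rewrite nsq_zero. apply sqrt_0. Qed.
Lemma norm_eq_sqrt {H : Hilbert} (x : H) : norm x = sqrt (nsq x).
Proof. reflexivity. Qed.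

Lemma quad_lemma (a b K : R) : 0 <= a -> 0 <= b -> 0 <= K ->
  (forall t, 0 <= a - 2 * t * K + t * t * K * b) -> K <= a * b.
Proof.
  intros Ha Hb HK Ht.
  destruct (Req_dec K 0) as [->|HK0]. nra.
  destruct (Req_dec b 0) as [->|Hb0].
  - specialize (Ht ((a + 1) / K)). exfalso. assert (HK' : K > 0) by lra.
    replace (a - 2 * ((a + 1) / K) * K + (a + 1) / K * ((a + 1) / K) * K * 0) with (- a - 2) in Ht by (field; lra).
    lra.
  - specialize (Ht (/ b)).
    assert (Hb' : b > 0) by lra.
    replace (a - 2 * / b * K + / b * / b * K * b) with (a - K / b) in Ht by (field; lra).
    assert (K / b <= a) by lra.
    apply (Rmult_le_compat_r b) in H; [|lra]. unfold Rdiv in H. rewrite Rmult_assoc, Rinv_l in H; lra.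
Qed.

Ltac vexp := unfold vsub in *; repeat (rewrite ?inner_add_l, ?inner_scal_l, ?inner_opp_l, ?inner_0_l).
Ltac veq := apply inner_ext_r; intro; vexp; Ceq.

Definition Cinv (a : C) : C :=
  mkC (Re a / (Re a * Re a + Im a * Im a)) (- Im a / (Re a * Re a + Im a * Im a)).

Lemma Cnorm_pos (a : C) : a <> C0 -> Re a * Re a + Im a * Im a > 0.
Proof.
  intros Ha. destruct a as [a1 a2]; simpl.
  destruct (Req_dec a1 0); destruct (Req_dec a2 0); try nra. subst. exfalso; apply Ha. Ceq.
Qed.

Lemma Cmul_inv (a : C) : a <> C0 -> Cmul a (Cinv a) = C1.
Proof.
  intros Ha. pose proof (Cnorm_pos a Ha). destruct a as [a1 a2]; simpl in *.
  unfold Cinv; apply C_ext; simpl; field; lra.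
Qed.

Definition form_ok {H : Hilbert} (f : H -> H -> C) : Prop :=
  (forall x y z, f (vadd x y) z = Cadd (f x z) (f y z)) /\
  (forall a x y, f (vscal a x) y = Cmul a (f x y)) /\
  (forall x y, f y x = Cconj (f x y)) /\
  (forall x, 0 <= Re (f x x)).

Lemma form_CS {H : Hilbert} (f : H -> H -> C) (x y : H) : form_ok f ->
  Re (f x y) * Re (f x y) + Im (f x y) * Im (f x y) <= Re (f x x) * Re (f y y).
Proof.
  intros [Fadd [Fscal [Fsym Fpos]]].
  assert (Fadd_r : forall x y z, f z (vadd x y) = Cadd (f z x) (f z y)).
  { intros. rewrite Fsym, Fadd, Cconj_add, <- !Fsym. reflexivity. }
  assert (Fscal_r : forall a x y, f y (vscal a x) = Cmul (Cconj a) (f y x)).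
  { intros. rewrite Fsym, Fscal, Cconj_mul, <- Fsym. reflexivity. }
  assert (Him : forall x, Im (f x x) = 0).
  { intros w. pose proof (Fsym w w) as E. destruct (f w w) as [a b]. unfold Cconj in E; simpl in *.
    injection E; intros; lra. }
  set (cr := Re (f x y)). set (ci := Im (f x y)).
  apply quad_lemma; try apply Fpos; try nra.
  intros t. set (mu := mkC (- t * cr) (- t * ci)).
  pose proof (Fpos (vadd x (vscal mu y))) as P.
  rewrite Fadd, !Fadd_r, !Fscal, !Fscal_r, (Fsym x y) in P.
  pose proof (Him y) as Hy. fold cr ci in P |- *.
  destruct (f x y) as [c1 c2] eqn:Ec. subst cr ci. simpl in *.
  destruct (f x x) as [a1 a2]. destruct (f y y) as [b1 b2]. simpl in *. subst b2. nra.
Qed.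

Lemma inner_form_ok {H : Hilbert} : form_ok (@inner H).
Proof. repeat split; intros; [apply inner_add_l|apply inner_scal_l|apply inner_sym|apply inner_pos]. Qed.

Lemma CS_inner {H : Hilbert} (x y : H) :
  Re (inner x y) * Re (inner x y) + Im (inner x y) * Im (inner x y) <= nsq x * nsq y.
Proof. apply form_CS, inner_form_ok. Qed.

Lemma abs_le_of_sq (r s : R) : 0 <= s -> r * r <= s * s -> Rabs r <= s.
Proof. intros Hs Hr. unfold Rabs; destruct (Rcase_abs r); nra. Qed.

Lemma abs_le_inv (r s : R) : Rabs r <= s -> - s <= r <= s.
Proof. unfold Rabs; destruct (Rcase_abs r); intros; lra. Qed.

Lemma rip_le_norm {H : Hilbert} (x y : H) : Rabs (rip x y) <= norm x * norm y.
Proof.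
  pose proof (CS_inner x y) as C1. rewrite <- !norm_sq in C1.
  pose proof (norm_nonneg x). pose proof (norm_nonneg y).
  unfold rip. apply abs_le_of_sq. nra.
  pose proof (Rle_0_sqr (Im (inner x y))). unfold Rsqr in H2. nra.
Qed.

Lemma Im_le_norm {H : Hilbert} (x y : H) : Rabs (Im (inner x y)) <= norm x * norm y.
Proof.
  pose proof (CS_inner x y) as C1. rewrite <- !norm_sq in C1.
  pose proof (norm_nonneg x). pose proof (norm_nonneg y).
  apply abs_le_of_sq. nra.
  pose proof (Rle_0_sqr (Re (inner x y))). unfold Rsqr in H2. nra.
Qed.

Lemma norm_le_of_sq {H : Hilbert} (x : H) r : 0 <= r -> nsq x <= r * r -> norm x <= r.
Proof.
  intros Hr Hx. pose proof (norm_nonneg x). pose proof (norm_sq x). nra.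
Qed.

Lemma norm_triangle {H : Hilbert} (x y : H) : norm (vadd x y) <= norm x + norm y.
Proof.
  apply norm_le_of_sq. pose proof (norm_nonneg x); pose proof (norm_nonneg y); lra.
  rewrite nsq_add, <- !norm_sq. pose proof (rip_le_norm x y). apply abs_le_inv in H0. nra.
Qed.

Lemma nsq_scalC {H : Hilbert} (a : C) (x : H) : nsq (vscal a x) = (Re a * Re a + Im a * Im a) * nsq x.
Proof.
  unfold nsq. rewrite inner_scal_l, inner_scal_r. pose proof (inner_self_im x).
  destruct (inner x x) as [u v]; destruct a as [a1 a2]; simpl in *. subst v. ring.
Qed.

Definition Cabs (a : C) : R := sqrt (Re a * Re a + Im a * Im a).

Lemma norm_scalC {H : Hilbert} (a : C) (x : H) : norm (vscal a x) = Cabs a * norm x.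
Proof.
  unfold norm. fold (nsq (vscal a x)) (nsq x). rewrite nsq_scalC. unfold Cabs.
  rewrite sqrt_mult_alt. reflexivity. nra.
Qed.

Lemma norm_scal {H : Hilbert} (r : R) (x : H) : norm (vscal (RtoC r) x) = Rabs r * norm x.
Proof.
  rewrite norm_scalC. unfold Cabs. simpl. f_equal. rewrite Rmult_0_l, Rplus_0_r.
  rewrite <- Rsqr_def. apply sqrt_Rsqr_abs.
Qed.

Lemma norm_opp {H : Hilbert} (x : H) : norm (vopp x) = norm x.
Proof. unfold norm. fold (nsq (vopp x)) (nsq x). rewrite nsq_opp. reflexivity. Qed.

Lemma norm_eq0 {H : Hilbert} (x : H) : norm x = 0 -> x = vzero.
Proof. intros E. apply nsq_eq0. rewrite <- norm_sq, E. ring. Qed.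

Lemma norm_sub_sym {H : Hilbert} (x y : H) : norm (vsub x y) = norm (vsub y x).
Proof.
  unfold vsub. rewrite <- norm_opp, vopp_add, vopp_opp, vadd_comm. reflexivity.
Qed.

Lemma vsub_triangle {H : Hilbert} (x y w : H) : norm (vsub x w) <= norm (vsub x y) + norm (vsub y w).
Proof.
  replace (vsub x w) with (vadd (vsub x y) (vsub y w)). apply norm_triangle.
  unfold vsub. rewrite <- vadd_assoc, (vadd_assoc (vopp y)), vadd_opp_l, vadd_0. reflexivity.
Qed.

Lemma conv_unique {H : Hilbert} (u : nat -> H) l l' : converges u l -> converges u l' -> l = l'.
Proof.
  intros C1 C2. apply vsub_eq0. apply norm_eq0.
  destruct (Rle_lt_dec (norm (vsub l l')) 0) as [Hle|Hlt]. pose proof (norm_nonneg (vsub l l')); lra.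
  exfalso. set (e := norm (vsub l l') / 2).
  destruct (C1 e) as [N1 HN1]. unfold e; lra. destruct (C2 e) as [N2 HN2]. unfold e; lra.
  specialize (HN1 (max N1 N2) ltac:(lia)). specialize (HN2 (max N1 N2) ltac:(lia)).
  pose proof (vsub_triangle l (u (max N1 N2)) l'). fold (vsub (u (max N1 N2)) l) in HN1.
  fold (vsub (u (max N1 N2)) l') in HN2. rewrite norm_sub_sym in HN1. unfold e in *. lra.
Qed.

Lemma conv_add {H : Hilbert} (u v : nat -> H) l m :
  converges u l -> converges v m -> converges (fun n => vadd (u n) (v n)) (vadd l m).
Proof.
  intros C1 C2 eps He. destruct (C1 (eps/2)) as [N1 HN1]. lra. destruct (C2 (eps/2)) as [N2 HN2]. lra.
  exists (max N1 N2). intros n Hn. specialize (HN1 n ltac:(lia)). specialize (HN2 n ltac:(lia)).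
  replace (vadd (vadd (u n) (v n)) (vopp (vadd l m))) with (vadd (vadd (u n) (vopp l)) (vadd (v n) (vopp m))).
  pose proof (norm_triangle (vadd (u n) (vopp l)) (vadd (v n) (vopp m))). lra.
  rewrite vopp_add. rewrite !vadd_assoc. f_equal. rewrite <- !vadd_assoc. f_equal. apply vadd_comm.
Qed.

Lemma conv_scal {H : Hilbert} (a : C) (u : nat -> H) l :
  converges u l -> converges (fun n => vscal a (u n)) (vscal a l).
Proof.
  intros C1 eps He. destruct (C1 (eps / (Cabs a + 1))) as [N HN].
  apply Rdiv_lt_0_compat. lra. unfold Cabs; pose proof (sqrt_pos (Re a * Re a + Im a * Im a)); lra.
  exists N. intros n Hn. specialize (HN n Hn).
  rewrite <- vscal_opp, <- vscal_distr_v, norm_scalC.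
  assert (0 <= Cabs a) by apply sqrt_pos.
  pose proof (norm_nonneg (vadd (u n) (vopp l))).
  apply (Rmult_lt_compat_l (Cabs a + 1)) in HN; [|lra].
  replace ((Cabs a + 1) * (eps / (Cabs a + 1))) with eps in HN by (field; lra). nra.
Qed.

Lemma conv_const {H : Hilbert} (l : H) : converges (fun _ => l) l.
Proof. intros eps He. exists 0%nat. intros. fold (vsub l l). rewrite vsub_self, norm_zero. lra. Qed.

Lemma conv_ext {H : Hilbert} (u v : nat -> H) l : (forall n, u n = v n) -> converges u l -> converges v l.
Proof. intros E C1 eps He. destruct (C1 eps He) as [N HN]. exists N. intros n Hn. rewrite <- E. auto. Qed.

Lemma conv_shift_eq {H : Hilbert} (u v : nat -> H) l K : (forall n, (n >= K)%nat -> u n = v n) -> converges u l -> converges v l.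
Proof. intros E C1 eps He. destruct (C1 eps He) as [N HN]. exists (max N K). intros n Hn. rewrite <- E by lia. apply HN; lia. Qed.

Lemma bounded_bound {H : Hilbert} (T : op H) : bounded_op T -> exists M, 0 < M /\ forall x, norm (T x) <= M * norm x.
Proof.
  intros [_ [M HM]]. exists (Rabs M + 1). split. pose proof (Rabs_pos M); lra.
  intros x. specialize (HM x). pose proof (norm_nonneg x). pose proof (Rle_abs M). nra.
Qed.

Lemma lin_opp {H : Hilbert} (T : op H) x : linear_op T -> T (vopp x) = vopp (T x).
Proof. intros [_ Ts]. rewrite !vopp_scal, Ts. reflexivity. Qed.
Lemma lin_sub {H : Hilbert} (T : op H) x y : linear_op T -> T (vsub x y) = vsub (T x) (T y).
Proof. intros L. unfold vsub. rewrite (proj1 L), lin_opp; auto. Qed.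
Lemma lin_zero {H : Hilbert} (T : op H) : linear_op T -> T vzero = vzero.
Proof. intros [_ Ts]. rewrite <- (vscal_C0 vzero) at 1. rewrite Ts, vscal_C0. reflexivity. Qed.

Lemma conv_op {H : Hilbert} (T : op H) (u : nat -> H) l :
  bounded_op T -> converges u l -> converges (fun n => T (u n)) (T l).
Proof.
  intros Tb C1. destruct (bounded_bound T Tb) as [M [HM Hb]]. intros eps He.
  destruct (C1 (eps / M)) as [N HN]. apply Rdiv_lt_0_compat; lra. exists N. intros n Hn.
  fold (vsub (T (u n)) (T l)). rewrite <- lin_sub by apply Tb. specialize (HN n Hn).
  eapply Rle_lt_trans. apply Hb. fold (vsub (u n) l) in HN.
  apply (Rmult_lt_compat_l M) in HN; [|lra]. replace (M * (eps / M)) with eps in HN by (field; lra). lra.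
Qed.

Definition cauchy {H : Hilbert} (u : nat -> H) : Prop :=
  forall eps, eps > 0 -> exists N, forall n m, (n >= N)%nat -> (m >= N)%nat -> norm (vsub (u n) (u m)) < eps.

Lemma cauchy_conv {H : Hilbert} (u : nat -> H) : cauchy u -> exists l, converges u l.
Proof. intros Cu. destruct (complete u Cu) as [l Hl]. exists l. exact Hl. Qed.

Lemma conv_cauchy {H : Hilbert} (u : nat -> H) l : converges u l -> cauchy u.
Proof.
  intros C1 eps He. destruct (C1 (eps/2)) as [N HN]. lra. exists N. intros n m Hn Hm.
  pose proof (vsub_triangle (u n) l (u m)). specialize (HN n Hn) as A. specialize (HN m Hm) as B.
  fold (vsub (u n) l) in A. fold (vsub (u m) l) in B. rewrite norm_sub_sym in B. lra.
Qed.

Lemma conv_norm_bound {H : Hilbert} (u : nat -> H) l r : converges u l -> (forall n, norm (u n) <= r) -> norm l <= r.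
Proof.
  intros C1 Hb. destruct (Rle_lt_dec (norm l) r) as [|Hlt]; auto. exfalso.
  destruct (C1 (norm l - r)) as [N HN]. lra. specialize (HN N (le_n _)). specialize (Hb N).
  pose proof (norm_triangle (vsub (u N) l) (vopp (u N))). unfold vsub in H0.
  rewrite vadd_comm, vadd_assoc, vadd_opp_l, vadd_0, norm_opp, norm_opp in H0. lra.
Qed.

Lemma conv_inner_l {H : Hilbert} (u : nat -> H) l y : converges u l ->
  forall eps, eps > 0 -> exists N, forall n, (n >= N)%nat ->
   Rabs (Re (inner (u n) y) - Re (inner l y)) < eps /\ Rabs (Im (inner (u n) y) - Im (inner l y)) < eps.
Proof.
  intros C1 eps He. destruct (C1 (eps / (norm y + 1))) as [N HN].
  apply Rdiv_lt_0_compat. lra. pose proof (norm_nonneg y); lra.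
  exists N. intros n Hn. specialize (HN n Hn).
  pose proof (norm_nonneg y). pose proof (norm_nonneg (vadd (u n) (vopp l))).
  assert (Hk : norm (vadd (u n) (vopp l)) * norm y < eps).
  { apply (Rmult_lt_compat_l (norm y + 1)) in HN; [|lra].
    replace ((norm y + 1) * (eps / (norm y + 1))) with eps in HN by (field; lra). nra. }
  pose proof (rip_le_norm (vadd (u n) (vopp l)) y). pose proof (Im_le_norm (vadd (u n) (vopp l)) y).
  unfold rip in *. rewrite inner_add_l, inner_opp_l in *. simpl in *.
  split; [replace (Re (inner (u n) y) - Re (inner l y)) with (Re (inner (u n) y) + (-1 * Re (inner l y) - 0 * Im (inner l y))) by ring
         |replace (Im (inner (u n) y) - Im (inner l y)) with (Im (inner (u n) y) + (-1 * Im (inner l y) + 0 * Re (inner l y))) by ring]; lra.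
Qed.

Lemma R_eq_eps (a b : R) : (forall eps, eps > 0 -> Rabs (a - b) < eps) -> a = b.
Proof.
  intros Hk. destruct (Req_dec a b) as [|Hne]; auto. exfalso.
  specialize (Hk (Rabs (a - b))). assert (Rabs (a - b) > 0) by (apply Rabs_pos_lt; lra). specialize (Hk H). lra.
Qed.

Lemma inner_limit_eq {H : Hilbert} (u : nat -> H) l y c : converges u l ->
  (forall n, inner (u n) y = c) -> inner l y = c.
Proof.
  intros C1 E. apply C_ext; apply R_eq_eps; intros eps He;
  destruct (conv_inner_l u l y C1 _ He) as [N HN];
  destruct (HN N (le_n _)) as [A B]; rewrite E in A, B; rewrite Rabs_minus_sym; assumption.
Qed.

Lemma small_inv (g : R) : g > 0 -> exists N : nat, forall n, (n >= N)%nat -> / (INR n + 1) < g.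
Proof.
  intros Hg. destruct (archimed (/ g)) as [A _].
  assert (0 <= IZR (up (/ g))). { pose proof (Rinv_0_lt_compat g Hg). lra. }
  exists (Z.to_nat (up (/ g))). intros n Hn.
  apply le_INR in Hn. rewrite INR_IZR_INZ, Z2Nat.id in Hn. 2: apply le_IZR; auto.
  pose proof (Rinv_0_lt_compat g Hg).
  assert (Hx : INR n + 1 > / g) by lra.
  apply Rinv_lt_contravar in Hx. rewrite Rinv_inv in Hx. exact Hx.
  apply Rmult_lt_0_compat; lra.
Qed.

Lemma quad_zero (R0 W : R) : 0 <= W -> (forall t, 0 <= -2 * t * R0 + t * t * W) -> R0 = 0.
Proof.
  intros HW Ht. specialize (Ht (R0 / (W+1))).
  assert (E : -2 * (R0 / (W + 1)) * R0 + R0 / (W + 1) * (R0 / (W + 1)) * W = R0 * R0 * (- W - 2) / ((W+1)*(W+1)))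
    by (field; lra).
  rewrite E in Ht. assert (0 < (W+1)*(W+1)) by nra.
  apply (Rmult_le_compat_r ((W+1)*(W+1))) in Ht; [|lra].
  unfold Rdiv in Ht. rewrite Rmult_assoc, Rinv_l, Rmult_1_r, Rmult_0_l in Ht by lra. nra.
Qed.

Definition choice_fun {A B : Type} (P : A -> B -> Prop) (h : forall a, exists b, P a b) : A -> B :=
  fun a => proj1_sig (constructive_indefinite_description _ (h a)).
Lemma choice_fun_spec {A B : Type} (P : A -> B -> Prop) (h : forall a, exists b, P a b) a : P a (choice_fun P h a).
Proof. unfold choice_fun. apply proj2_sig. Qed.

Lemma fun_choice {A B : Type} (P : A -> B -> Prop) : (forall a, exists b, P a b) -> exists f : A -> B, forall a, P a (f a).
Proof. intros h. exists (choice_fun P h). apply choice_fun_spec. Qed.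

Lemma closed_zero {H : Hilbert} (M : H -> Prop) : closed_subspace M -> M vzero.
Proof. intros [A _]; exact A. Qed.
Lemma closed_add {H : Hilbert} (M : H -> Prop) x y : closed_subspace M -> M x -> M y -> M (vadd x y).
Proof. intros [_ [A _]]; apply A. Qed.
Lemma closed_scal {H : Hilbert} (M : H -> Prop) a x : closed_subspace M -> M x -> M (vscal a x).
Proof. intros [_ [_ [A _]]]; apply A. Qed.
Lemma closed_lim {H : Hilbert} (M : H -> Prop) u l : closed_subspace M -> (forall n, M (u n)) -> converges u l -> M l.
Proof. intros [_ [_ [_ A]]]; apply A. Qed.
Lemma closed_sub {H : Hilbert} (M : H -> Prop) x y : closed_subspace M -> M x -> M y -> M (vsub x y).
Proof. intros CM Hx Hy. unfold vsub. rewrite vopp_scal. apply closed_add; auto. apply closed_scal; auto. Qed.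

Lemma parallelogram {H : Hilbert} (a b : H) : nsq (vadd a b) + nsq (vsub a b) = 2 * nsq a + 2 * nsq b.
Proof. rewrite nsq_add, nsq_sub. ring. Qed.

Lemma projection {H : Hilbert} (M : H -> Prop) (y : H) : closed_subspace M ->
  exists m, M m /\ forall w, M w -> inner (vsub y m) w = C0.
Proof.
  intros CM.
  set (E := fun r => exists m, M m /\ r = - nsq (vsub y m)).
  assert (Eb : bound E). { exists 0. intros r [m [_ ->]]. pose proof (nsq_nonneg (vsub y m)); lra. }
  assert (Ene : exists r, E r). { exists (- nsq (vsub y vzero)). exists vzero. split; auto. apply closed_zero; auto. }
  destruct (completeness E Eb Ene) as [L [HL1 HL2]].
  set (d := - L).
  assert (Hd1 : forall m, M m -> d <= nsq (vsub y m)).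
  { intros m Hm. assert (E (- nsq (vsub y m))) by (exists m; auto). specialize (HL1 _ H0). unfold d; lra. }
  assert (Hd2 : forall eps, eps > 0 -> exists m, M m /\ nsq (vsub y m) < d + eps).
  { intros eps He. apply NNPP. intros Hn. assert (is_upper_bound E (L - eps)).
    { intros r [m [Hm ->]]. apply Rnot_lt_le. intros Hlt. apply Hn. exists m. split; auto. unfold d; lra. }
    specialize (HL2 _ H0). lra. }
  assert (Hseq : forall n : nat, exists m, M m /\ nsq (vsub y m) < d + / (INR n + 1)).
  { intros n. apply Hd2. apply Rinv_0_lt_compat. pose proof (pos_INR n); lra. }
  destruct (fun_choice _ Hseq) as [mm Hmm].
  assert (Cm : cauchy mm).
  { intros eps He. destruct (small_inv (eps * eps / 4)) as [N HN]. nra.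
    exists N. intros n k Hn Hk.
    destruct (Hmm n) as [Mn Hn']. destruct (Hmm k) as [Mk Hk'].
    pose proof (parallelogram (vsub y (mm n)) (vsub y (mm k))) as Pg.
    assert (E1 : vadd (vsub y (mm n)) (vsub y (mm k)) = vscal (RtoC 2) (vsub y (vscal (RtoC (/2)) (vadd (mm n) (mm k))))).
    { veq. }
    assert (E2 : vsub (vsub y (mm n)) (vsub y (mm k)) = vopp (vsub (mm n) (mm k))). { veq. }
    rewrite E1, E2, nsq_scal, nsq_opp in Pg.
    assert (Mmid : M (vscal (RtoC (/ 2)) (vadd (mm n) (mm k)))). { apply closed_scal; auto. apply closed_add; auto. }
    specialize (Hd1 _ Mmid). specialize (HN n Hn) as A. specialize (HN k Hk) as B.

    assert (nsq (vsub (mm n) (mm k)) < eps * eps) by lra.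
    pose proof (norm_sq (vsub (mm n) (mm k))). pose proof (norm_nonneg (vsub (mm n) (mm k))). nra. }
  destruct (cauchy_conv _ Cm) as [m Hm].
  assert (HMm : M m). { apply (closed_lim M mm); auto. intros n; apply Hmm. }
  exists m. split; auto.
  assert (Hre : forall w, M w -> rip (vsub y m) w = 0).
  { intros w Hw. apply (quad_zero _ (nsq w)). apply nsq_nonneg. intros t.
    apply Rnot_lt_le. intros Hlt. set (g := - (-2 * t * rip (vsub y m) w + t * t * nsq w)).
    assert (Hg : g > 0) by (unfold g; lra).
    destruct (conv_inner_l mm m w Hm (g / (4 * (Rabs t + 1)))) as [N1 HN1].
    { apply Rdiv_lt_0_compat; auto. pose proof (Rabs_pos t); lra. }
    destruct (small_inv (g/2)) as [N2 HN2]. lra.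
    set (n := max N1 N2). destruct (HN1 n ltac:(unfold n; lia)) as [A _]. specialize (HN2 n ltac:(unfold n; lia)).
    destruct (Hmm n) as [Mn Hn'].
    assert (Mw : M (vadd (mm n) (vscal (RtoC t) w))). { apply closed_add; auto. apply closed_scal; auto. }
    specialize (Hd1 _ Mw).
    assert (E3 : vsub y (vadd (mm n) (vscal (RtoC t) w)) = vsub (vsub y (mm n)) (vscal (RtoC t) w)) by veq.
    rewrite E3, nsq_sub, nsq_scal, rip_scal_r in Hd1.
    assert (E4 : rip (vsub y (mm n)) w = rip (vsub y m) w + (Re (inner m w) - Re (inner (mm n) w))).
    { unfold rip, vsub. rewrite !inner_add_l, !inner_opp_l. simpl. ring. }
    rewrite E4 in Hd1.
    set (dd := Re (inner (mm n) w) - Re (inner m w)) in *.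
    assert (Hk : Rabs (2 * t * dd) <= g / 2).
    { rewrite Rabs_mult, Rabs_mult, (Rabs_pos_eq 2) by lra.
      pose proof (Rabs_pos t). pose proof (Rabs_pos dd).
      assert (Rabs dd * (4 * (Rabs t + 1)) < g).
      { apply (Rmult_lt_compat_r (4 * (Rabs t + 1))) in A. 2: lra.
        replace (g / (4 * (Rabs t + 1)) * (4 * (Rabs t + 1))) with g in A by (field; lra). lra. }
      nra. }
    apply abs_le_inv in Hk.
    replace (Re (inner m w) - Re (inner (mm n) w)) with (- dd) in Hd1 by (unfold dd; ring).
    assert (nsq (vsub y (mm n)) < d + g / 2) by lra.
    assert (Hgd : -2 * t * rip (vsub y m) w + t * t * nsq w = - g) by (unfold g; ring).
    assert (Hd1x : d <= nsq (vsub y (mm n)) + (-2 * t * rip (vsub y m) w + t * t * nsq w) + 2 * t * dd) by (eapply Rle_trans; [exact Hd1| right; ring]).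
    rewrite Hgd in Hd1x. lra. }
  intros w Hw. apply C_ext.
  - apply Hre; auto.
  - simpl. rewrite <- rip_Ci_r. apply Hre. apply closed_scal; auto.
Qed.

Lemma Cabs_inner_le {H : Hilbert} (x y : H) : Cabs (inner x y) <= norm x * norm y.
Proof.
  unfold Cabs. pose proof (CS_inner x y). rewrite <- !norm_sq in H0.
  pose proof (norm_nonneg x); pose proof (norm_nonneg y).
  rewrite <- (sqrt_Rsqr (norm x * norm y)) by nra. apply sqrt_le_1_alt. unfold Rsqr. nra.
Qed.

Lemma Cabs_zero (a : C) : Cabs a = 0 -> a = C0.
Proof.
  unfold Cabs. intros E. apply sqrt_eq_0 in E; [|nra]. destruct a; simpl in *. Ceq; nra.
Qed.
Lemma Cabs_nonneg a : 0 <= Cabs a. Proof. apply sqrt_pos. Qed.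

Lemma C_riesz_alg (a b : C) (n : R) : b <> C0 -> n <> 0 ->
  Cmul (Cconj (Cmul (Cconj b) (RtoC (/ n)))) (Cmul (Cmul a (Cinv b)) (RtoC n)) = a.
Proof.
  intros Hb Hn. pose proof (Cnorm_pos b Hb). destruct a as [a1 a2], b as [b1 b2]. simpl in *.
  unfold Cinv; apply C_ext; simpl; field; lra.
Qed.

Lemma Cmul_comm_aux (a b : C) : Cmul a b = Cmul b a.
Proof. Ceq. Qed.
Lemma C_mul_cancel_aux (a b i : C) : Cmul i b = C1 -> Cadd a (Cmul (RtoC (-1)) (Cmul (Cmul a i) b)) = C0.
Proof.
  intros E. destruct a as [a1 a2], b as [b1 b2], i as [i1 i2]. unfold Cmul in E; simpl in E.
  injection E; intros E1 E2. apply C_ext; simpl.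
  - transitivity (a1 * (1 - (i1 * b1 - i2 * b2)) + a2 * (i1 * b2 + i2 * b1)). ring. rewrite E1, E2. ring.
  - transitivity (a2 * (1 - (i1 * b1 - i2 * b2)) - a1 * (i1 * b2 + i2 * b1)). ring. rewrite E1, E2. ring.
Qed.

Definition bfun {H : Hilbert} (phi : H -> C) : Prop :=
  (forall x y, phi (vadd x y) = Cadd (phi x) (phi y)) /\
  (forall a x, phi (vscal a x) = Cmul a (phi x)) /\
  exists K, forall x, Cabs (phi x) <= K * norm x.

Lemma riesz {H : Hilbert} (phi : H -> C) : bfun phi -> exists v, forall x, phi x = inner x v.
Proof.
  intros [Pa [Ps [K HK]]].
  assert (P0 : phi vzero = C0). { rewrite <- (vscal_C0 vzero), Ps. Ceq. }
  assert (Pop : forall x, phi (vopp x) = Cmul (RtoC (-1)) (phi x)). { intros; rewrite vopp_scal, Ps; auto. }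
  destruct (classic (forall x, phi x = C0)) as [Hall|Hex].
  { exists vzero. intros x. rewrite Hall, inner_0_r. auto. }
  apply not_all_ex_not in Hex. destruct Hex as [x0 Hx0].
  set (M := fun x => phi x = C0).
  assert (CM : closed_subspace M).
  { unfold M; repeat split.
    - auto.
    - intros x y Hx Hy. rewrite Pa, Hx, Hy. Ceq.
    - intros a x Hx. rewrite Ps, Hx. Ceq.
    - intros u l Hu Hl. apply Cabs_zero. apply Rle_antisym; [|apply Cabs_nonneg].
      apply Rnot_lt_le. intros Hlt.
      destruct (Hl (Cabs (phi l) / (Rabs K + 1))) as [N HN].
      { apply Rdiv_lt_0_compat; auto. pose proof (Rabs_pos K); lra. }
      specialize (HN N (le_n _)). specialize (HK (vadd (u N) (vopp l))).
      rewrite Pa, Pop, Hu in HK.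
      replace (Cadd C0 (Cmul (RtoC (-1)) (phi l))) with (Cmul (RtoC (-1)) (phi l)) in HK by Ceq.
      assert (Cabs (Cmul (RtoC (-1)) (phi l)) = Cabs (phi l)).
      { unfold Cabs. f_equal. simpl. ring. }
      rewrite H0 in HK. pose proof (norm_nonneg (vadd (u N) (vopp l))). pose proof (Rabs_pos K).
      pose proof (Rle_abs K).
      assert (K * norm (vadd (u N) (vopp l)) <= (Rabs K + 1) * norm (vadd (u N) (vopp l))) by nra.
      apply (Rmult_lt_compat_l (Rabs K + 1)) in HN; [|lra].
      replace ((Rabs K + 1) * (Cabs (phi l) / (Rabs K + 1))) with (Cabs (phi l)) in HN by (field; lra).
      lra. }
  destruct (projection M x0 CM) as [m [Mm Hm]].
  set (r := vsub x0 m).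
  assert (Pr : phi r = phi x0). { unfold r, vsub. rewrite Pa, Pop, Mm. Ceq. }
  assert (Hr0 : r <> vzero). { intros E. apply Hx0. rewrite <- Pr, E. auto. }
  assert (Hnr : nsq r > 0). { pose proof (nsq_nonneg r). destruct (Req_dec (nsq r) 0). exfalso; apply Hr0, nsq_eq0; auto. lra. }
  exists (vscal (Cmul (Cconj (phi r)) (RtoC (/ nsq r))) r).
  intros x. set (c := Cmul (phi x) (Cinv (phi r))).
  assert (Mx : M (vsub x (vscal c r))).
  { unfold M, vsub. rewrite Pa, Pop, Ps. unfold c. rewrite Pr.
    assert (phi x0 <> C0) by auto. pose proof (Cmul_inv _ H0).
    apply C_mul_cancel_aux. rewrite Cmul_comm_aux. exact H1. }
  specialize (Hm _ Mx). fold r in Hm.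
  assert (E1 : inner x r = Cmul c (RtoC (nsq r))).
  { rewrite inner_sym. unfold vsub in Hm. rewrite inner_add_r, inner_opp_r, inner_scal_r in Hm.
    assert (Hi := inner_self_im r). unfold nsq.
    destruct (inner r x) as [a1 a2]; destruct c as [c1 c2]; destruct (inner r r) as [d1 d2]; simpl in *.
    injection Hm; intros. Ceq; nra. }
  rewrite inner_scal_r, E1. unfold c. symmetry. apply C_riesz_alg. rewrite Pr; auto. lra.
Qed.

Definition adj_rel {H : Hilbert} (T S : op H) : Prop := forall x y, inner (T x) y = inner x (S y).
Definition has_adj {H : Hilbert} (T : op H) : Prop := exists S, adj_rel T S.

Lemma adjoint_spec {H : Hilbert} (T : op H) : has_adj T -> adj_rel T (adjoint T).
Proof.
  intros [S HS]. unfold adjoint, adj_rel.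
  pose proof (epsilon_spec (inhabits T) (fun S => forall x y, inner (T x) y = inner x (S y))) as E.
  apply E. exists S; exact HS.
Qed.

Lemma adj_rel_unique {H : Hilbert} (T S S' : op H) : adj_rel T S -> adj_rel T S' -> S = S'.
Proof.
  intros A B. extensionality y. apply inner_ext_l. intros x. rewrite <- A, <- B. reflexivity.
Qed.

Lemma adjoint_eq {H : Hilbert} (T S : op H) : adj_rel T S -> adjoint T = S.
Proof. intros A. apply (adj_rel_unique T). apply adjoint_spec. exists S; auto. auto. Qed.

Lemma adj_rel_sym {H : Hilbert} (T S : op H) : adj_rel T S -> adj_rel S T.
Proof. intros A x y. rewrite inner_sym, <- A, <- inner_sym. reflexivity. Qed.

Lemma adj_rel_linear {H : Hilbert} (T S : op H) : adj_rel T S -> linear_op S.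
Proof.
  intros A. split.
  - intros x y. apply inner_ext_l. intros z. rewrite <- A, !inner_add_r, <- !A. reflexivity.
  - intros a x. apply inner_ext_l. intros z. rewrite <- A, !inner_scal_r, <- !A. reflexivity.
Qed.

Lemma adj_rel_bounded {H : Hilbert} (T S : op H) : bounded_op T -> adj_rel T S -> bounded_op S.
Proof.
  intros Tb A. split. eapply adj_rel_linear; eauto.
  destruct (bounded_bound T Tb) as [M [HM Hb]]. exists M. intros y.
  pose proof (A (S y) y) as E. assert (nsq (S y) = Re (inner (T (S y)) y)).
  { rewrite E. reflexivity. }
  pose proof (rip_le_norm (T (S y)) y). unfold rip in H1. rewrite <- H0 in H1.
  rewrite <- norm_sq in H1. apply abs_le_inv in H1.
  pose proof (Hb (S y)). pose proof (norm_nonneg (S y)). pose proof (norm_nonneg y).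
  pose proof (norm_nonneg (T (S y))).
  destruct (Req_dec (norm (S y)) 0). rewrite H6. nra.
  assert (norm (S y) * norm (S y) <= M * norm (S y) * norm y) by nra.
  apply (Rmult_le_reg_l (norm (S y))). lra. nra.
Qed.

Lemma bounded_has_adj {H : Hilbert} (T : op H) : bounded_op T -> has_adj T.
Proof.
  intros Tb. destruct (bounded_bound T Tb) as [M [HM Hb]].
  assert (forall y, exists v, forall x, inner (T x) y = inner x v).
  { intros y. apply riesz. split; [|split].
    - intros. rewrite (proj1 (proj1 Tb)), inner_add_l. auto.
    - intros. rewrite (proj2 (proj1 Tb)), inner_scal_l. auto.
    - exists (M * norm y). intros x. eapply Rle_trans. apply Cabs_inner_le.
      pose proof (Hb x). pose proof (norm_nonneg y). nra. }
  destruct (fun_choice _ H0) as [S HS]. exists S. intros x y. apply HS.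
Qed.

Lemma adjoint_rel {H : Hilbert} (T : op H) : bounded_op T -> adj_rel T (adjoint T).
Proof. intros Tb. apply adjoint_spec, bounded_has_adj; auto. Qed.

Lemma adjoint_bounded {H : Hilbert} (T : op H) : bounded_op T -> bounded_op (adjoint T).
Proof. intros Tb. eapply adj_rel_bounded; eauto. apply adjoint_rel; auto. Qed.

Lemma adjoint_adjoint {H : Hilbert} (T : op H) : bounded_op T -> adjoint (adjoint T) = T.
Proof. intros Tb. apply adjoint_eq. apply adj_rel_sym. apply adjoint_rel; auto. Qed.

Lemma adj_rel_comp {H : Hilbert} (T S T' S' : op H) : adj_rel T T' -> adj_rel S S' ->
  adj_rel (ocomp T S) (ocomp S' T').
Proof. intros A B x y. unfold ocomp. rewrite A, B. reflexivity. Qed.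

Lemma bounded_comp {H : Hilbert} (T S : op H) : bounded_op T -> bounded_op S -> bounded_op (ocomp T S).
Proof.
  intros Tb Sb. destruct (bounded_bound T Tb) as [M1 [HM1 Hb1]]. destruct (bounded_bound S Sb) as [M2 [HM2 Hb2]].
  split. split; intros; unfold ocomp; rewrite ?(proj1 (proj1 Sb)), ?(proj1 (proj1 Tb)), ?(proj2 (proj1 Sb)), ?(proj2 (proj1 Tb)); auto.
  exists (M1 * M2). intros x. unfold ocomp. eapply Rle_trans. apply Hb1. specialize (Hb2 x). nra.
Qed.

Lemma bounded_id {H : Hilbert} : bounded_op (fun x : H => x).
Proof. split. split; auto. exists 1. intros; lra. Qed.

Lemma bounded_zero {H : Hilbert} : bounded_op (fun _ : H => vzero).
Proof. split. split; intros. rewrite vadd_0; auto. rewrite vscal_0; auto. exists 0. intros. rewrite norm_zero. pose proof (norm_nonneg x). lra. Qed.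

Lemma bounded_add {H : Hilbert} (T S : op H) : bounded_op T -> bounded_op S -> bounded_op (fun x => vadd (T x) (S x)).
Proof.
  intros Tb Sb. destruct (bounded_bound T Tb) as [M1 [HM1 Hb1]]. destruct (bounded_bound S Sb) as [M2 [HM2 Hb2]].
  split. split; intros.
  - rewrite (proj1 (proj1 Sb)), (proj1 (proj1 Tb)). rewrite !vadd_assoc. f_equal. rewrite <- !vadd_assoc. f_equal. apply vadd_comm.
  - rewrite (proj2 (proj1 Sb)), (proj2 (proj1 Tb)), vscal_distr_v. auto.
  - exists (M1 + M2). intros x. eapply Rle_trans. apply norm_triangle. specialize (Hb1 x). specialize (Hb2 x). lra.
Qed.

Lemma bounded_scal {H : Hilbert} (a : C) (T : op H) : bounded_op T -> bounded_op (fun x => vscal a (T x)).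
Proof.
  intros Tb. destruct (bounded_bound T Tb) as [M1 [HM1 Hb1]].
  split. split; intros.
  - rewrite (proj1 (proj1 Tb)), vscal_distr_v. auto.
  - rewrite (proj2 (proj1 Tb)), !vscal_assoc. f_equal. Ceq.
  - exists (Cabs a * M1). intros x. rewrite norm_scalC. specialize (Hb1 x). pose proof (Cabs_nonneg a). nra.
Qed.

Lemma adj_rel_id {H : Hilbert} : adj_rel (fun x : H => x) (fun x => x).
Proof. intros x y; auto. Qed.
Lemma adj_rel_zero {H : Hilbert} : adj_rel (fun _ : H => vzero) (fun _ => vzero).
Proof. intros x y. rewrite inner_0_l, inner_0_r. auto. Qed.
Lemma adj_rel_add {H : Hilbert} (T S T' S' : op H) : adj_rel T T' -> adj_rel S S' ->
  adj_rel (fun x => vadd (T x) (S x)) (fun x => vadd (T' x) (S' x)).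
Proof. intros A B x y. rewrite inner_add_l, inner_add_r, A, B. auto. Qed.
Lemma adj_rel_scal {H : Hilbert} (a : C) (T T' : op H) : adj_rel T T' ->
  adj_rel (fun x => vscal a (T x)) (fun x => vscal (Cconj a) (T' x)).
Proof. intros A x y. rewrite inner_scal_l, inner_scal_r, Cconj_conj, A. auto. Qed.

Fixpoint rsum (f : nat -> R) (n : nat) : R :=
  match n with O => 0 | S m => rsum f m + f m end.

Lemma rsum_S f n : rsum f (S n) = rsum f n + f n. Proof. reflexivity. Qed.
Lemma rsum_ext f g n : (forall k, (k < n)%nat -> f k = g k) -> rsum f n = rsum g n.
Proof. induction n; simpl; intros; auto. rewrite IHn by (intros; apply H; lia). rewrite H by lia. auto. Qed.
Lemma rsum_shift f n : rsum f (S n) = f O + rsum (fun j => f (S j)) n.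
Proof. induction n. simpl. ring. remember (S n) as m. simpl. rewrite IHn. subst. simpl. ring. Qed.
Lemma rsum_add f g n : rsum (fun k => f k + g k) n = rsum f n + rsum g n.
Proof. induction n; simpl; [ring|rewrite IHn; ring]. Qed.
Lemma rsum_scal a f n : rsum (fun k => a * f k) n = a * rsum f n.
Proof. induction n; simpl; [ring|rewrite IHn; ring]. Qed.
Lemma rsum_nonneg f n : (forall k, (k < n)%nat -> 0 <= f k) -> 0 <= rsum f n.
Proof. induction n; simpl; intros; [lra|]. pose proof (H n ltac:(lia)). pose proof (IHn ltac:(intros; apply H; lia)). lra. Qed.
Lemma rsum_le f g n : (forall k, (k < n)%nat -> f k <= g k) -> rsum f n <= rsum g n.
Proof. induction n; simpl; intros; [lra|]. pose proof (H n ltac:(lia)). pose proof (IHn ltac:(intros; apply H; lia)). lra. Qed.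
Lemma rsum_mono f n m : (n <= m)%nat -> (forall k, 0 <= f k) -> rsum f n <= rsum f m.
Proof. intros Hnm Hf. induction Hnm; [lra|]. simpl. pose proof (Hf m). lra. Qed.

Lemma NNPP_aux (P : Prop) : ~ ~ P -> P.
Proof. intros H. destruct (Classical_Prop.classic P); tauto. Qed.

(* coefficients of 1 - sqrt(1-t) *)
Fixpoint cfun (n : nat) : nat -> R :=
  match n with
  | O => fun _ => 0
  | S m => fun k => if (k <=? m)%nat then cfun m k else
            match m with O => / 2 | _ => / 2 * rsum (fun j => cfun m (S j) * cfun m (m - j)) m end
  end.

Definition cc (n : nat) : R := cfun n n.

Lemma cfun_S_eq m k : cfun (S m) k = if (k <=? m)%nat then cfun m k else
            match m with O => / 2 | _ => / 2 * rsum (fun j => cfun m (S j) * cfun m (m - j)) m end.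
Proof. reflexivity. Qed.

Lemma cfun_stable n k : (k <= n)%nat -> cfun n k = cc k.
Proof.
  induction n; intros Hk. inversion Hk; subst. reflexivity.
  destruct (Nat.eq_dec k (S n)) as [->|Hne]. reflexivity.
  simpl. replace (k <=? n)%nat with true by (symmetry; apply Nat.leb_le; lia). apply IHn. lia.
Qed.

Lemma cc_0 : cc 0 = 0. Proof. reflexivity. Qed.
Lemma cc_1 : cc 1 = / 2. Proof. reflexivity. Qed.
Lemma cc_S m : (m >= 1)%nat -> cc (S m) = / 2 * rsum (fun j => cc (S j) * cc (m - j)) m.
Proof.
  intros Hm. unfold cc at 1. rewrite cfun_S_eq. replace (S m <=? m)%nat with false by (symmetry; apply Nat.leb_gt; lia).
  destruct m as [|m']. lia. f_equal. apply rsum_ext. intros k Hk. rewrite !cfun_stable by lia. reflexivity.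
Qed.

Lemma cc_nonneg n : 0 <= cc n.
Proof.
  induction n as [n IH] using lt_wf_ind. destruct n. rewrite cc_0; lra.
  destruct n. rewrite cc_1; lra.
  rewrite cc_S by lia. apply Rmult_le_pos. lra. apply rsum_nonneg. intros k Hk.
  apply Rmult_le_pos; apply IH; lia.
Qed.

Definition ss (n : nat) : R := rsum cc (S n).
Definition conv (n : nat) : R := rsum (fun k => cc k * cc (n - k)) (S n).

Lemma conv_S m : (m >= 1)%nat -> conv (S m) = 2 * cc (S m).
Proof.
  intros Hm. unfold conv. rewrite rsum_shift. simpl (rsum _ (S _)).
  rewrite cc_0, Nat.sub_diag, cc_0. rewrite cc_S by auto.
  replace (rsum (fun j => cc (S j) * cc (m - j)) m) with (rsum (fun j : nat => cc (S j) * cc (S m - S j)) m). field.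
  apply rsum_ext. intros; f_equal.
Qed.

Definition QQ (N : nat) : R := rsum (fun k => cc k * ss (N - k)) (S N).

Lemma ss_S n : ss (S n) = ss n + cc (S n). Proof. reflexivity. Qed.
Lemma ss_0 : ss 0 = 0. Proof. unfold ss. simpl. rewrite cc_0. ring. Qed.

Lemma QQ_step N : QQ (S N) = QQ N + conv (S N).
Proof.
  unfold QQ, conv. rewrite (rsum_S _ (S N)). rewrite Nat.sub_diag, ss_0.
  assert (E : rsum (fun k => cc k * ss (S N - k)) (S N) = rsum (fun k => cc k * ss (N - k) + cc k * cc (S N - k)) (S N)).
  { apply rsum_ext. intros k Hk. replace (S N - k)%nat with (S (N - k)) by lia. rewrite ss_S. ring. }
  rewrite E, rsum_add. rewrite (rsum_S _ (S N)).
  rewrite Nat.sub_diag, cc_0. ring.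
Qed.

Lemma QQ_id N : (N >= 1)%nat -> QQ N = 2 * ss N - 1.
Proof.
  induction N; intros HN. lia.
  destruct N. unfold QQ. rewrite !rsum_S. replace (1-0)%nat with 1%nat by lia. replace (1-1)%nat with 0%nat by lia. rewrite ss_0. unfold ss. rewrite !rsum_S. simpl rsum. rewrite cc_0, cc_1. field.
  rewrite QQ_step, IHN by lia. rewrite conv_S by lia. rewrite (ss_S (S N)). ring.
Qed.

Lemma ss_nonneg n : 0 <= ss n.
Proof. apply rsum_nonneg. intros; apply cc_nonneg. Qed.
Lemma ss_mono n m : (n <= m)%nat -> ss n <= ss m.
Proof. intros. apply rsum_mono. lia. apply cc_nonneg. Qed.

Lemma QQ_upper N : QQ N <= ss N * ss (pred N).
Proof.
  unfold QQ. unfold ss at 2. rewrite Rmult_comm, <- rsum_scal.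
  apply rsum_le. intros k Hk. destruct k. rewrite cc_0. lra.
  rewrite (Rmult_comm (ss (pred N))). apply Rmult_le_compat_l. apply cc_nonneg. apply ss_mono. lia.
Qed.

Lemma ss_le_1 n : ss n <= 1.
Proof.
  induction n. rewrite ss_0; lra.
  pose proof (QQ_upper (S n)). rewrite QQ_id in H by lia. simpl in H.
  pose proof (ss_nonneg (S n)). nra.
Qed.

Lemma QQ_lower M K : ss M * ss K <= QQ (M + K).
Proof.
  unfold QQ. unfold ss at 1. rewrite Rmult_comm, <- rsum_scal.
  apply Rle_trans with (rsum (fun k => cc k * ss (M + K - k)) (S M)).
  - apply rsum_le. intros k Hk. rewrite Rmult_comm. apply Rmult_le_compat_l. apply cc_nonneg. apply ss_mono. lia.
  - apply rsum_mono. lia. intros k. apply Rmult_le_pos. apply cc_nonneg. apply ss_nonneg.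
Qed.

Lemma ss_to_1 eps : eps > 0 -> exists N, forall n, (n >= N)%nat -> 1 - ss n < eps.
Proof.
  intros He.
  set (E := fun r => exists n, r = ss n).
  assert (Eb : bound E). { exists 1. intros r [n ->]. apply ss_le_1. }
  assert (Ene : exists r, E r). { exists (ss 0); exists 0%nat; auto. }
  destruct (completeness E Eb Ene) as [L [HL1 HL2]].
  assert (HsL : forall n, ss n <= L). { intros n. apply HL1. exists n; auto. }
  assert (HL1' : L <= 1). { apply HL2. intros r [n ->]. apply ss_le_1. }
  assert (Happ : forall d, d > 0 -> exists n, L - d < ss n).
  { intros d Hd. apply NNPP_aux. intros Hn. assert (is_upper_bound E (L - d)).
    { intros r [n ->]. apply Rnot_lt_le. intros Hlt. apply Hn. exists n. auto. }
    specialize (HL2 _ H). lra. }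
  assert (Hhalf : ss 1 = / 2). { unfold ss. simpl. rewrite cc_0, cc_1. ring. }
  assert (HL : L = 1).
  { destruct (Req_dec L 1) as [|Hne]; auto. exfalso.
    assert (HLlt : L < 1) by lra. pose proof (HsL 1%nat). rewrite Hhalf in H.
    set (d := (1 - L) * (1 - L) / 4).
    assert (Hd : d > 0). { unfold d. nra. }
    destruct (Happ d Hd) as [n Hn].
    pose proof (QQ_lower n n). pose proof (HsL (n + n)%nat).
    destruct (Nat.eq_dec (n+n) 0) as [Hz|Hz].
    - assert (n = 0%nat) by lia. subst n. rewrite ss_0 in Hn. unfold d in Hn. nra.
    - rewrite QQ_id in H0 by lia.
      assert (L - d > 0) by (unfold d; nra).
      assert ((L - d) * (L - d) < ss n * ss n) by nra.
      unfold d in *. nra. }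
  subst L. destruct (Happ eps He) as [N HN]. exists N. intros n Hn. pose proof (ss_mono N n Hn). lra.
Qed.

Fixpoint vsum {H : Hilbert} (f : nat -> H) (n : nat) : H :=
  match n with O => vzero | S m => vadd (vsum f m) (f m) end.

Lemma vsum_S {H : Hilbert} (f : nat -> H) n : vsum f (S n) = vadd (vsum f n) (f n).
Proof. reflexivity. Qed.

Lemma vsum_ext {H : Hilbert} (f g : nat -> H) n : (forall k, (k < n)%nat -> f k = g k) -> vsum f n = vsum g n.
Proof. induction n; simpl; intros; auto. rewrite IHn by (intros; apply H0; lia). rewrite H0 by lia. auto. Qed.

Lemma vsum_add {H : Hilbert} (f g : nat -> H) n : vsum (fun k => vadd (f k) (g k)) n = vadd (vsum f n) (vsum g n).
Proof. induction n; simpl. rewrite vadd_0; auto. rewrite IHn. veq. Qed.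

Lemma vsum_sub {H : Hilbert} (f g : nat -> H) n : vsum (fun k => vsub (f k) (g k)) n = vsub (vsum f n) (vsum g n).
Proof. induction n; simpl. veq. rewrite IHn. veq. Qed.

Lemma vsum_lin {H : Hilbert} (T : op H) (f : nat -> H) n : linear_op T -> T (vsum f n) = vsum (fun k => T (f k)) n.
Proof. intros L. induction n; simpl. apply lin_zero; auto. rewrite (proj1 L), IHn. auto. Qed.

Lemma vsum_scal_const {H : Hilbert} (a : nat -> R) (v : H) n :
  vsum (fun k => vscal (RtoC (a k)) v) n = vscal (RtoC (rsum a n)) v.
Proof. induction n; simpl. rewrite RtoC_0, vscal_C0; auto. rewrite IHn, <- vscal_distr_c, Cadd_RtoC. auto. Qed.

Lemma vsum_norm {H : Hilbert} (f : nat -> H) n : norm (vsum f n) <= rsum (fun k => norm (f k)) n.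
Proof. induction n; simpl. rewrite norm_zero; lra. eapply Rle_trans. apply norm_triangle. lra. Qed.

Fixpoint opow {H : Hilbert} (B : op H) (n : nat) (x : H) : H :=
  match n with O => x | S m => B (opow B m x) end.

Lemma opow_lin {H : Hilbert} (B : op H) n : linear_op B -> linear_op (opow B n).
Proof.
  intros L. induction n; simpl. split; auto.
  split; intros. rewrite (proj1 IHn), (proj1 L). auto. rewrite (proj2 IHn), (proj2 L). auto.
Qed.

Lemma opow_add {H : Hilbert} (B : op H) k m x : opow B k (opow B m x) = opow B (k + m) x.
Proof. induction k; simpl; auto. rewrite IHk. auto. Qed.

Lemma opow_contr {H : Hilbert} (B : op H) n x : (forall y, norm (B y) <= norm y) -> norm (opow B n x) <= norm x.
Proof. intros Bc. induction n; simpl. lra. eapply Rle_trans. apply Bc. auto. Qed.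

Lemma opow_inter {H : Hilbert} (B B' X : op H) n x : (forall y, X (B y) = B' (X y)) -> X (opow B n x) = opow B' n (X x).
Proof. intros E. induction n; simpl; auto. rewrite E, IHn. auto. Qed.

Definition TT {H : Hilbert} (B : op H) (N : nat) (x : H) : H :=
  vsum (fun k => vscal (RtoC (cc k)) (opow B k x)) (S N).

Lemma TT_S {H : Hilbert} (B : op H) N x : TT B (S N) x = vadd (TT B N x) (vscal (RtoC (cc (S N))) (opow B (S N) x)).
Proof. reflexivity. Qed.

Lemma TT_0 {H : Hilbert} (B : op H) x : TT B 0 x = vzero.
Proof. unfold TT. simpl. rewrite cc_0, RtoC_0, vscal_C0, vadd_0. auto. Qed.

Lemma TT_lin {H : Hilbert} (B : op H) N : linear_op B -> linear_op (TT B N).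
Proof.
  intros L. unfold TT. split; intros.
  - rewrite <- vsum_add. apply vsum_ext. intros k _. rewrite (proj1 (opow_lin B k L)), vscal_distr_v. auto.
  - rewrite vsum_lin. apply vsum_ext. intros k _. rewrite (proj2 (opow_lin B k L)), !vscal_assoc. f_equal. Ceq.
    split; intros. apply vscal_distr_v. rewrite !vscal_assoc. f_equal. Ceq.
Qed.

Lemma TT_norm {H : Hilbert} (B : op H) N x : (forall y, norm (B y) <= norm y) -> norm (TT B N x) <= ss N * norm x.
Proof.
  intros Bc. unfold TT, ss. eapply Rle_trans. apply vsum_norm.
  rewrite Rmult_comm, <- rsum_scal. apply rsum_le. intros k _. rewrite norm_scal, Rabs_pos_eq by apply cc_nonneg.
  rewrite (Rmult_comm (norm x)). apply Rmult_le_compat_l. apply cc_nonneg. apply opow_contr; auto.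
Qed.

Lemma TT_diff {H : Hilbert} (B : op H) N M x : (N <= M)%nat -> (forall y, norm (B y) <= norm y) ->
  norm (vsub (TT B M x) (TT B N x)) <= (ss M - ss N) * norm x.
Proof.
  intros HNM Bc. induction HNM. rewrite vsub_self, norm_zero. rewrite Rminus_diag, Rmult_0_l. lra.
  rewrite TT_S. replace (vsub (vadd (TT B m x) (vscal (RtoC (cc (S m))) (opow B (S m) x))) (TT B N x))
    with (vadd (vsub (TT B m x) (TT B N x)) (vscal (RtoC (cc (S m))) (opow B (S m) x))) by veq.
  eapply Rle_trans. apply norm_triangle. rewrite norm_scal, Rabs_pos_eq by apply cc_nonneg.
  pose proof (opow_contr B (S m) x Bc). pose proof (cc_nonneg (S m)). rewrite ss_S. nra.
Qed.

Definition UU {H : Hilbert} (B : op H) (N : nat) (x : H) : H :=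
  vsum (fun k => vscal (RtoC (cc k)) (opow B k (TT B (N - k) x))) (S N).

Lemma UU_step {H : Hilbert} (B : op H) N x : linear_op B ->
  UU B (S N) x = vadd (UU B N x) (vscal (RtoC (conv (S N))) (opow B (S N) x)).
Proof.
  intros L. unfold UU. rewrite (vsum_S _ (S N)). rewrite Nat.sub_diag, TT_0, (lin_zero _ (opow_lin B _ L)), vscal_0, vadd_0r.
  unfold conv. rewrite (rsum_S _ (S N)), Nat.sub_diag, cc_0, Rmult_0_r, Rplus_0_r.
  rewrite <- vsum_scal_const, <- vsum_add. apply vsum_ext. intros k Hk.
  replace (S N - k)%nat with (S (N - k)) by lia. rewrite TT_S.
  rewrite (proj1 (opow_lin B k L)), (proj2 (opow_lin B k L)), opow_add.
  replace (k + S (N - k))%nat with (S N) by lia. rewrite vscal_distr_v, vscal_assoc, Cmul_RtoC. auto.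
Qed.

Lemma UU_id {H : Hilbert} (B : op H) N x : linear_op B -> (N >= 1)%nat ->
  vadd (UU B N x) (B x) = vscal (RtoC 2) (TT B N x).
Proof.
  intros L HN. induction N. lia. destruct N.
  - unfold UU. rewrite !vsum_S. simpl vsum. replace (1-0)%nat with 1%nat by lia. replace (1-1)%nat with 0%nat by lia. rewrite TT_0. simpl opow. rewrite (lin_zero _ L). unfold TT. rewrite !vsum_S. simpl vsum. simpl opow. rewrite cc_0, cc_1. veq.
  - rewrite UU_step by auto. rewrite conv_S by lia.
    replace (vadd (vadd (UU B (S N) x) (vscal (RtoC (2 * cc (S (S N)))) (opow B (S (S N)) x))) (B x))
      with (vadd (vadd (UU B (S N) x) (B x)) (vscal (RtoC (2 * cc (S (S N)))) (opow B (S (S N)) x))) by veq.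
    rewrite IHN by lia. rewrite (TT_S B (S N)). veq.
Qed.

Lemma TT_TT {H : Hilbert} (B : op H) N x : linear_op B -> (N >= 1)%nat ->
  vsub (TT B N (TT B N x)) (vsub (vscal (RtoC 2) (TT B N x)) (B x)) =
  vsum (fun k => vscal (RtoC (cc k)) (opow B k (vsub (TT B N x) (TT B (N - k) x)))) (S N).
Proof.
  intros L HN. rewrite <- UU_id by auto.
  replace (vsub (vadd (UU B N x) (B x)) (B x)) with (UU B N x) by veq.
  unfold UU. unfold TT at 1. rewrite <- vsum_sub. apply vsum_ext. intros k _.
  rewrite (lin_sub _ _ _ (opow_lin B k L)). veq.
Qed.

Lemma TT_rem {H : Hilbert} (B : op H) N x : linear_op B -> (forall y, norm (B y) <= norm y) -> (N >= 1)%nat ->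
  norm (vsub (TT B N (TT B N x)) (vsub (vscal (RtoC 2) (TT B N x)) (B x))) <= (1 - ss N) * (1 - ss N) * norm x.
Proof.
  intros L Bc HN. rewrite TT_TT by auto. eapply Rle_trans. apply vsum_norm.
  apply Rle_trans with (rsum (fun k => cc k * ((ss N - ss (N - k)) * norm x)) (S N)).
  { apply rsum_le. intros k Hk. rewrite norm_scal, Rabs_pos_eq by apply cc_nonneg.
    apply Rmult_le_compat_l. apply cc_nonneg. eapply Rle_trans. apply opow_contr; auto.
    apply TT_diff; auto. lia. }
  replace (rsum (fun k => cc k * ((ss N - ss (N - k)) * norm x)) (S N))
    with (rsum (fun k => (ss N * norm x) * cc k + (- norm x) * (cc k * ss (N - k))) (S N)).
  2: { apply rsum_ext. intros; ring. }
  rewrite rsum_add, !rsum_scal. fold (ss N). fold (QQ N). rewrite QQ_id by auto. right. ring.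
Qed.

Definition cauchyR (s : nat -> R) := forall eps, eps > 0 -> exists N, forall n m, (n >= N)%nat -> (m >= N)%nat -> Rabs (s n - s m) < eps.

Lemma TT_cauchy {H : Hilbert} (B : op H) x : (forall y, norm (B y) <= norm y) -> cauchy (fun N => TT B N x).
Proof.
  intros Bc eps He. destruct (ss_to_1 (eps / (norm x + 1))) as [N HN].
  { apply Rdiv_lt_0_compat; auto. pose proof (norm_nonneg x); lra. }
  exists N. intros n m Hn Hm.
  assert (forall a b, (N <= a)%nat -> (a <= b)%nat -> norm (vsub (TT B b x) (TT B a x)) < eps).
  { intros a b Ha Hab. eapply Rle_lt_trans. apply TT_diff; auto.
    pose proof (HN a Ha). pose proof (ss_le_1 b). pose proof (ss_mono a b Hab). pose proof (norm_nonneg x).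
    apply Rle_lt_trans with ((1 - ss a) * norm x). apply Rmult_le_compat_r; lra.
    apply Rle_lt_trans with (eps / (norm x + 1) * norm x). apply Rmult_le_compat_r; lra.
    apply Rle_lt_trans with (eps / (norm x + 1) * (norm x + 1) - eps / (norm x + 1)).
    assert (eps / (norm x + 1) > 0) by (apply Rdiv_lt_0_compat; lra). lra.
    replace (eps / (norm x + 1) * (norm x + 1)) with eps by (field; lra).
    assert (eps / (norm x + 1) > 0) by (apply Rdiv_lt_0_compat; lra). lra. }
  destruct (le_ge_dec n m). rewrite norm_sub_sym. apply H0; lia. apply H0; lia.
Qed.

Definition Sop {H : Hilbert} (B : op H) (x : H) : H :=
  epsilon (inhabits x) (fun l => converges (fun N => TT B N x) l).

Lemma Sop_spec {H : Hilbert} (B : op H) x : (forall y, norm (B y) <= norm y) -> converges (fun N => TT B N x) (Sop B x).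
Proof.
  intros Bc. unfold Sop. apply (epsilon_spec (inhabits x) (fun l => converges (fun N => TT B N x) l)).
  apply cauchy_conv. apply TT_cauchy; auto.
Qed.

Lemma Sop_unique {H : Hilbert} (B : op H) x l : (forall y, norm (B y) <= norm y) -> converges (fun N => TT B N x) l -> Sop B x = l.
Proof. intros Bc C1. eapply conv_unique. apply Sop_spec; auto. auto. Qed.

Lemma Sop_lin {H : Hilbert} (B : op H) : linear_op B -> (forall y, norm (B y) <= norm y) -> linear_op (Sop B).
Proof.
  intros L Bc. split; intros.
  - apply Sop_unique; auto. eapply conv_ext. 2: apply conv_add; apply Sop_spec; auto.
    intros n. simpl. rewrite (proj1 (TT_lin B n L)). auto.
  - apply Sop_unique; auto. eapply conv_ext. 2: apply conv_scal; apply Sop_spec; auto.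
    intros n. simpl. rewrite (proj2 (TT_lin B n L)). auto.
Qed.

Lemma Sop_norm {H : Hilbert} (B : op H) x : (forall y, norm (B y) <= norm y) -> norm (Sop B x) <= norm x.
Proof.
  intros Bc. apply (conv_norm_bound (fun N => TT B N x)). apply Sop_spec; auto.
  intros n. eapply Rle_trans. apply TT_norm; auto. pose proof (ss_le_1 n). pose proof (ss_nonneg n).
  pose proof (norm_nonneg x). nra.
Qed.

Lemma Sop_bounded {H : Hilbert} (B : op H) : linear_op B -> (forall y, norm (B y) <= norm y) -> bounded_op (Sop B).
Proof. intros L Bc. split. apply Sop_lin; auto. exists 1. intros. rewrite Rmult_1_l. apply Sop_norm; auto. Qed.

Lemma Sop_inter {H : Hilbert} (B B' X : op H) x : linear_op B -> linear_op B' ->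
  (forall y, norm (B y) <= norm y) -> (forall y, norm (B' y) <= norm y) -> bounded_op X ->
  (forall y, X (B y) = B' (X y)) -> X (Sop B x) = Sop B' (X x).
Proof.
  intros L L' Bc Bc' Xb E. symmetry. apply Sop_unique; auto.
  eapply conv_ext. 2: apply conv_op; [exact Xb| apply Sop_spec; auto].
  intros n. simpl. unfold TT. rewrite vsum_lin by apply Xb. apply vsum_ext. intros k _.
  rewrite (proj2 (proj1 Xb)). rewrite (opow_inter B B' X) by auto. auto.
Qed.

Lemma inner_lim2 {H : Hilbert} (u v : nat -> H) l m x y : converges u l -> converges v m ->
  (forall n, inner (u n) y = inner x (v n)) -> inner l y = inner x m.
Proof.
  intros Cu Cv E.
  assert (Cv' : forall eps, eps > 0 -> exists N, forall n, (n >= N)%nat ->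
     Rabs (Re (inner (v n) x) - Re (inner m x)) < eps /\ Rabs (Im (inner (v n) x) - Im (inner m x)) < eps)
    by (apply conv_inner_l; auto).
  pose proof (conv_inner_l u l y Cu) as Cu'.
  rewrite (inner_sym m x). apply C_ext; apply R_eq_eps; intros eps He; simpl;
  destruct (Cu' (eps/2)) as [N1 HN1]; try lra; destruct (Cv' (eps/2)) as [N2 HN2]; try lra;
  destruct (HN1 (max N1 N2)) as [A1 A2]; try lia; destruct (HN2 (max N1 N2)) as [B1 B2]; try lia;
  rewrite E, (inner_sym (v _) x) in A1, A2; simpl in *.
  all: apply Rabs_def2 in A1; apply Rabs_def2 in A2; apply Rabs_def2 in B1; apply Rabs_def2 in B2;
    apply Rabs_def1; lra.
Qed.

Lemma TT_selfadj {H : Hilbert} (B : op H) N : linear_op B -> adj_rel B B -> adj_rel (TT B N) (TT B N).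
Proof.
  intros L A x y. unfold TT. 
  assert (Hp : forall k x y, inner (opow B k x) y = inner x (opow B k y)).
  { induction k; simpl; intros. reflexivity. rewrite A, IHk, (opow_inter B B B k y0 (fun _ => eq_refl)). reflexivity. }
  induction (S N); simpl. rewrite inner_0_l, inner_0_r; auto.
  rewrite inner_add_l, inner_add_r, IHn, inner_scal_l, inner_scal_r, Cconj_RtoC, Hp. auto.
Qed.

Lemma Sop_selfadj {H : Hilbert} (B : op H) : linear_op B -> adj_rel B B -> (forall y, norm (B y) <= norm y) -> adj_rel (Sop B) (Sop B).
Proof.
  intros L A Bc x y. apply (inner_lim2 (fun N => TT B N x) (fun N => TT B N y)); try apply Sop_spec; auto.
  intros n. apply TT_selfadj; auto.
Qed.

Lemma Sop_sq {H : Hilbert} (B : op H) x : linear_op B -> (forall y, norm (B y) <= norm y) ->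
  Sop B (Sop B x) = vsub (vscal (RtoC 2) (Sop B x)) (B x).
Proof.
  intros L Bc. set (y := Sop B x).
  assert (C1 : converges (fun N => TT B N (TT B N x)) (Sop B y)).
  { intros eps He. destruct (Sop_spec B x Bc (eps/2)) as [N1 HN1]. lra.
    destruct (Sop_spec B y Bc (eps/2)) as [N2 HN2]. lra. exists (max N1 N2). intros n Hn.
    fold (vsub (TT B n (TT B n x)) (Sop B y)).
    replace (vsub (TT B n (TT B n x)) (Sop B y)) with (vadd (TT B n (vsub (TT B n x) y)) (vsub (TT B n y) (Sop B y))).
    2: { rewrite (lin_sub _ _ _ (TT_lin B n L)). veq. }
    eapply Rle_lt_trans. apply norm_triangle. specialize (HN1 n ltac:(lia)). specialize (HN2 n ltac:(lia)).
    pose proof (TT_norm B n (vsub (TT B n x) y) Bc). pose proof (ss_le_1 n). pose proof (ss_nonneg n).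
    fold (vsub (TT B n x) (Sop B x)) in HN1. fold (vsub (TT B n y) (Sop B y)) in HN2. fold y in HN1.
    pose proof (norm_nonneg (vsub (TT B n x) y)). nra. }
  assert (C2 : converges (fun N => vsub (TT B N (TT B N x)) (vsub (vscal (RtoC 2) (TT B N x)) (B x))) vzero).
  { intros eps He. destruct (ss_to_1 (eps / (norm x + 1))) as [N HN].
    { apply Rdiv_lt_0_compat; auto. pose proof (norm_nonneg x); lra. }
    exists (max N 1). intros n Hn. rewrite vopp_zero, vadd_0r. eapply Rle_lt_trans. apply TT_rem; auto. lia.
    specialize (HN n ltac:(lia)). pose proof (ss_le_1 n). pose proof (norm_nonneg x).
    assert (eps / (norm x + 1) > 0) by (apply Rdiv_lt_0_compat; lra).
    assert (E : eps = eps / (norm x + 1) * (norm x + 1)) by (field; lra).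
    assert ((1 - ss n) * (1 - ss n) <= 1 - ss n) by (pose proof (ss_nonneg n); nra).
    rewrite E. apply Rle_lt_trans with ((1 - ss n) * norm x). apply Rmult_le_compat_r; lra.
    apply Rle_lt_trans with (eps / (norm x + 1) * norm x). apply Rmult_le_compat_r; lra. nra. }
  assert (C3 : converges (fun N => vsub (vscal (RtoC 2) (TT B N x)) (B x)) (vsub (vscal (RtoC 2) y) (B x))).
  { unfold vsub. apply conv_add. apply conv_scal. apply Sop_spec; auto. apply conv_const. }
  pose proof (conv_add _ _ _ _ C2 C3) as C4. rewrite vadd_0 in C4.
  eapply conv_unique. exact C1. eapply conv_ext. 2: exact C4. intros n. simpl. veq.
Qed.

Definition posop {H : Hilbert} (A : op H) : Prop :=
  bounded_op A /\ adj_rel A A /\ (forall x, 0 <= Re (inner (A x) x)).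

Lemma posop_form {H : Hilbert} (T : op H) : posop T -> form_ok (fun x y => inner (T x) y).
Proof.
  intros [Tb [Ts Tp]]. repeat split.
  - intros. rewrite (proj1 (proj1 Tb)), inner_add_l. auto.
  - intros. rewrite (proj2 (proj1 Tb)), inner_scal_l. auto.
  - intros. rewrite Ts, inner_sym, Ts. auto.
  - auto.
Qed.

Lemma pos_zero {H : Hilbert} (T : op H) y : posop T -> Re (inner (T y) y) = 0 -> T y = vzero.
Proof.
  intros P E. pose proof (form_CS _ y (T y) (posop_form T P)) as C1. simpl in C1.
  rewrite E, Rmult_0_l in C1. fold (nsq (T y)) in C1.
  apply nsq_eq0. pose proof (Rle_0_sqr (Im (inner (T y) (T y)))). unfold Rsqr in H0. nra.
Qed.

Definition Bop {H : Hilbert} (A : op H) (c : R) : op H := fun x => vsub x (vscal (RtoC (/ c)) (A x)).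
Definition Wop {H : Hilbert} (A : op H) (c : R) : op H :=
  fun x => vscal (RtoC (sqrt c)) (vsub x (Sop (Bop A c) x)).

Definition sqrt_hyp {H : Hilbert} (A : op H) (c : R) : Prop :=
  posop A /\ 0 < c /\ forall x, Re (inner (A x) x) <= c * nsq x.

Lemma bounded_ext_aux {H : Hilbert} (T S : op H) : (forall x, S x = T x) -> bounded_op S -> bounded_op T.
Proof. intros E Sb. replace T with S. auto. extensionality x; auto. Qed.

Lemma Bop_bounded {H : Hilbert} (A : op H) c : bounded_op A -> bounded_op (Bop A c).
Proof.
  intros Ab. unfold Bop, vsub.
  apply (bounded_add (fun x => x) (fun x => vopp (vscal (RtoC (/ c)) (A x)))). apply bounded_id.
  eapply bounded_ext_aux. 2: apply (bounded_scal (RtoC (- / c)) A Ab).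
  intros x. rewrite vopp_scal, vscal_assoc, Cmul_RtoC. f_equal. f_equal. ring.
Qed.

Lemma Bop_selfadj {H : Hilbert} (A : op H) c : adj_rel A A -> adj_rel (Bop A c) (Bop A c).
Proof.
  intros As x y. unfold Bop, vsub. rewrite inner_add_l, inner_add_r, inner_opp_l, inner_opp_r,
    inner_scal_l, inner_scal_r, As, Cconj_RtoC. auto.
Qed.

Lemma Bop_form {H : Hilbert} (A : op H) c x : 0 < c ->
  Re (inner (Bop A c x) x) = nsq x - / c * Re (inner (A x) x).
Proof. intros Hc. unfold Bop, vsub. rewrite inner_add_l, inner_opp_l, inner_scal_l. simpl. unfold nsq. ring. Qed.

Lemma Bop_pos {H : Hilbert} (A : op H) c : sqrt_hyp A c -> posop (Bop A c).
Proof.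
  intros [[Ab [As Ap]] [Hc Hb]]. split; [|split].
  apply Bop_bounded; auto. apply Bop_selfadj; auto.
  intros x. rewrite Bop_form by auto. specialize (Hb x).
  apply (Rmult_le_compat_l (/ c)) in Hb. 2: left; apply Rinv_0_lt_compat; auto.
  rewrite <- Rmult_assoc, Rinv_l, Rmult_1_l in Hb by lra. lra.
Qed.

Lemma Bop_contr {H : Hilbert} (A : op H) c : sqrt_hyp A c -> forall y, norm (Bop A c y) <= norm y.
Proof.
  intros Hy x. pose proof (Bop_pos A c Hy) as P.
  destruct Hy as [[Ab [As Ap]] [Hc Hb]].
  assert (Hle : forall z, Re (inner (Bop A c z) z) <= nsq z).
  { intros z. rewrite Bop_form by auto. pose proof (Ap z). pose proof (Rinv_0_lt_compat c Hc). nra. }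
  pose proof (form_CS _ x (Bop A c x) (posop_form _ P)) as C1. simpl in C1.
  fold (nsq (Bop A c x)) in C1. pose proof (Hle x). pose proof (Hle (Bop A c x)).
  pose proof (proj2 (proj2 P) x). pose proof (proj2 (proj2 P) (Bop A c x)).
  pose proof (nsq_nonneg (Bop A c x)). pose proof (nsq_nonneg x).
  pose proof (Rle_0_sqr (Im (inner (Bop A c x) (Bop A c x)))). unfold Rsqr in H6.
  assert (nsq (Bop A c x) * nsq (Bop A c x) <= nsq x * nsq (Bop A c x)) by nra.
  assert (nsq (Bop A c x) <= nsq x).
  { destruct (Req_dec (nsq (Bop A c x)) 0). lra. apply (Rmult_le_reg_r (nsq (Bop A c x))). lra. lra. }
  apply norm_le_of_sq. apply norm_nonneg. rewrite norm_sq. auto.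
Qed.

Lemma Bop_lin {H : Hilbert} (A : op H) c : sqrt_hyp A c -> linear_op (Bop A c).
Proof. intros Hy. apply Bop_bounded. apply Hy. Qed.

Lemma vscal_sqrt {H : Hilbert} c (v : H) : 0 <= c ->
  vscal (RtoC (sqrt c)) (vscal (RtoC (sqrt c)) v) = vscal (RtoC c) v.
Proof. intros Hc. rewrite vscal_assoc, Cmul_RtoC, sqrt_sqrt; auto. Qed.

Lemma Wop_sq {H : Hilbert} (A : op H) c x : sqrt_hyp A c -> Wop A c (Wop A c x) = A x.
Proof.
  intros Hy. pose proof (Bop_lin A c Hy) as L. pose proof (Bop_contr A c Hy) as Bc.
  pose proof (Sop_lin _ L Bc) as SL. destruct Hy as [_ [Hc _]].
  unfold Wop. rewrite (proj2 SL), (lin_sub _ _ _ SL), Sop_sq by auto.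
  set (s := Sop (Bop A c) x).
  transitivity (vscal (RtoC (sqrt c)) (vscal (RtoC (sqrt c)) (vsub (vsub x s) (vsub s (vsub (vscal (RtoC 2) s) (Bop A c x)))))).
  { f_equal. veq. }
  rewrite vscal_sqrt by lra. unfold Bop. 
  transitivity (vscal (RtoC c) (vscal (RtoC (/ c)) (A x))). veq.
  rewrite vscal_assoc, Cmul_RtoC, Rinv_r, RtoC_1, vscal_1 by lra. auto.
Qed.

Lemma Wop_bounded {H : Hilbert} (A : op H) c : sqrt_hyp A c -> bounded_op (Wop A c).
Proof.
  intros Hy. pose proof (Bop_lin A c Hy) as L. pose proof (Bop_contr A c Hy) as Bc.
  unfold Wop. apply (bounded_scal (RtoC (sqrt c)) (fun x => vsub x (Sop (Bop A c) x))).
  unfold vsub. apply (bounded_add (fun x => x) (fun x => vopp (Sop (Bop A c) x))). apply bounded_id.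
  eapply bounded_ext_aux. 2: apply (bounded_scal (RtoC (-1)) (Sop (Bop A c))); apply Sop_bounded; auto.
  intros. rewrite vopp_scal. auto.
Qed.

Lemma Wop_selfadj {H : Hilbert} (A : op H) c : sqrt_hyp A c -> adj_rel (Wop A c) (Wop A c).
Proof.
  intros Hy. pose proof (Bop_lin A c Hy) as L. pose proof (Bop_contr A c Hy) as Bc.
  pose proof (Sop_selfadj _ L (Bop_selfadj A c (proj1 (proj2 (proj1 Hy)))) Bc) as SS.
  intros x y. unfold Wop, vsub. rewrite inner_scal_l, inner_scal_r, Cconj_RtoC, inner_add_l, inner_add_r,
    inner_opp_l, inner_opp_r, SS. auto.
Qed.

Lemma Wop_pos {H : Hilbert} (A : op H) c : sqrt_hyp A c -> posop (Wop A c).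
Proof.
  intros Hy. split; [apply Wop_bounded; auto| split; [apply Wop_selfadj; auto|]].
  pose proof (Bop_contr A c Hy) as Bc. intros x. unfold Wop, vsub.
  rewrite inner_scal_l, inner_add_l, inner_opp_l. simpl. rewrite !Rmult_0_l, !Rminus_0_r.
  pose proof (rip_le_norm (Sop (Bop A c) x) x). apply abs_le_inv in H0. unfold rip in H0.
  pose proof (Sop_norm _ x Bc). pose proof (norm_nonneg x). pose proof (norm_sq x). unfold nsq in H3.
  pose proof (sqrt_pos c). pose proof (norm_nonneg (Sop (Bop A c) x)).
  apply Rmult_le_pos. auto. nra.
Qed.

Lemma Wop_inter {H : Hilbert} (A A' X : op H) c x : sqrt_hyp A c -> sqrt_hyp A' c -> bounded_op X ->
  (forall y, X (A' y) = A (X y)) -> X (Wop A' c x) = Wop A c (X x).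
Proof.
  intros HA HA' Xb E. unfold Wop.
  rewrite (proj2 (proj1 Xb)), (lin_sub _ _ _ (proj1 Xb)).
  rewrite (Sop_inter (Bop A' c) (Bop A c) X x); auto.
  apply Bop_lin; auto. apply Bop_lin; auto. apply Bop_contr; auto. apply Bop_contr; auto.
  intros y. unfold Bop. rewrite (lin_sub _ _ _ (proj1 Xb)), (proj2 (proj1 Xb)), E. auto.
Qed.

Lemma Wop_unique {H : Hilbert} (A R : op H) c : sqrt_hyp A c -> posop R -> (forall x, R (R x) = A x) ->
  R = Wop A c.
Proof.
  intros HA PR RR. pose proof (Wop_pos A c HA) as PW.
  destruct PR as [Rb [Rs Rp]] eqn:EPR. pose proof PW as [Wb [Ws Wp]].
  assert (RA : forall y, R (A y) = A (R y)). { intros y. rewrite <- !RR. auto. }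
  assert (RW : forall y, R (Wop A c y) = Wop A c (R y)). { intros y. apply Wop_inter; auto. }
  set (W := Wop A c) in *.
  assert (WW : forall y, W (W y) = A y). { intros y. apply Wop_sq; auto. }
  set (D := fun y => vsub (R y) (W y)).
  assert (DL : linear_op D).
  { split; intros; unfold D. rewrite (proj1 (proj1 Rb)), (proj1 (proj1 Wb)). veq.
    rewrite (proj2 (proj1 Rb)), (proj2 (proj1 Wb)). veq. }
  assert (Sum0 : forall y, vadd (R (D y)) (W (D y)) = vzero).
  { intros y. unfold D. rewrite (lin_sub _ _ _ (proj1 Rb)), (lin_sub _ _ _ (proj1 Wb)), RR, WW, RW. veq. }
  assert (DD : forall y, D (D y) = vzero).
  { intros y. assert (E := f_equal (fun v => Re (inner v (D y))) (Sum0 y)). simpl in E.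
    rewrite inner_add_l, inner_0_l in E. simpl in E.
    pose proof (Rp (D y)). pose proof (Wp (D y)).
    assert (E1 : R (D y) = vzero) by (apply pos_zero; [split; auto| lra]).
    assert (E2 : W (D y) = vzero) by (apply pos_zero; auto; lra).
    unfold D at 1. rewrite E1, E2. veq. }
  extensionality y. apply vsub_eq0. fold (D y). apply nsq_eq0.
  unfold nsq. unfold D at 1. unfold vsub at 1. rewrite inner_add_l, inner_opp_l, Rs, Ws.
  replace (Cadd (inner y (R (D y))) (Cmul (RtoC (-1)) (inner y (W (D y))))) with (inner y (D (D y))).
  rewrite DD, inner_0_r. auto.
  change (D (D y)) with (vsub (R (D y)) (W (D y))). unfold vsub. rewrite inner_add_r, inner_opp_r. reflexivity.
Qed.

Lemma dense_range {H : Hilbert} (Z : op H) : bounded_op Z -> adj_rel Z Z -> trivial_kernel Z ->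
  forall y eps, eps > 0 -> exists x, norm (vsub (Z x) y) < eps.
Proof.
  intros Zb Zs Zk.
  set (M := fun y => forall eps, eps > 0 -> exists x, norm (vsub (Z x) y) < eps).
  assert (CM : closed_subspace M).
  { destruct (bounded_bound Z Zb) as [K [HK _]]. pose proof (proj1 Zb) as L.
    unfold M; repeat split.
    - intros eps He. exists vzero. rewrite (lin_zero _ L), vsub_self, norm_zero. lra.
    - intros x y Hx Hy eps He. destruct (Hx (eps/2)) as [a Ha]. lra. destruct (Hy (eps/2)) as [b Hb]. lra.
      exists (vadd a b). rewrite (proj1 L).
      replace (vsub (vadd (Z a) (Z b)) (vadd x y)) with (vadd (vsub (Z a) x) (vsub (Z b) y)) by veq.
      eapply Rle_lt_trans. apply norm_triangle. lra.
    - intros a x Hx eps He. destruct (Hx (eps / (Cabs a + 1))) as [b Hb].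
      { apply Rdiv_lt_0_compat; auto. pose proof (Cabs_nonneg a); lra. }
      exists (vscal a b). rewrite (proj2 L).
      replace (vsub (vscal a (Z b)) (vscal a x)) with (vscal a (vsub (Z b) x)) by veq.
      rewrite norm_scalC. pose proof (Cabs_nonneg a). pose proof (norm_nonneg (vsub (Z b) x)).
      apply (Rmult_lt_compat_l (Cabs a + 1)) in Hb; [|lra].
      replace ((Cabs a + 1) * (eps / (Cabs a + 1))) with eps in Hb by (field; lra). nra.
    - intros u l Hu Hl eps He. destruct (Hl (eps/2)) as [N HN]. lra. specialize (HN N (le_n _)).
      destruct (Hu N (eps/2)) as [x Hx]. lra. exists x.
      eapply Rle_lt_trans. apply (vsub_triangle _ (u N)). fold (vsub (u N) l) in HN. lra. }
  intros y. destruct (projection M y CM) as [m [Mm Hm]].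
  assert (Zr : Z (vsub y m) = vzero).
  { apply inner_zero_all. intros w. rewrite Zs. apply Hm.
    intros eps He. exists w. rewrite vsub_self, norm_zero. lra. }
  apply Zk in Zr. apply vsub_eq0 in Zr. subst m. exact Mm.
Qed.

Lemma dense_seq {H : Hilbert} (Z : op H) : bounded_op Z -> adj_rel Z Z -> trivial_kernel Z ->
  forall y, exists u : nat -> H, converges (fun n => Z (u n)) y.
Proof.
  intros Zb Zs Zk y.
  assert (forall n : nat, exists x, norm (vsub (Z x) y) < / (INR n + 1)).
  { intros n. apply dense_range; auto. apply Rinv_0_lt_compat. pose proof (pos_INR n); lra. }
  destruct (fun_choice _ H0) as [u Hu]. exists u. intros eps He.
  destruct (small_inv eps He) as [N HN]. exists N. intros n Hn. specialize (HN n Hn). specialize (Hu n).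
  fold (vsub (Z (u n)) y). lra.
Qed.

Lemma conv_norm_le {H : Hilbert} (u v : nat -> H) l m : converges u l -> converges v m ->
  (forall n, norm (u n) <= norm (v n)) -> norm l <= norm m.
Proof.
  intros Cu Cv Hle. apply Rnot_lt_le. intros Hlt. set (e := (norm l - norm m) / 2).
  destruct (Cu e) as [N1 HN1]. unfold e; lra. destruct (Cv e) as [N2 HN2]. unfold e; lra.
  set (n := max N1 N2). specialize (HN1 n ltac:(unfold n; lia)). specialize (HN2 n ltac:(unfold n; lia)).
  fold (vsub (u n) l) in HN1. fold (vsub (v n) m) in HN2.
  pose proof (vsub_triangle l (u n) vzero). pose proof (vsub_triangle (v n) m vzero).
  unfold vsub in H0, H1. rewrite vopp_zero, !vadd_0r in H0, H1. fold (vsub l (u n)) in H0. fold (vsub (v n) m) in H1.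
  rewrite norm_sub_sym in H0. specialize (Hle n). unfold e in *. lra.
Qed.

Lemma cancel_right {H : Hilbert} (Z X Y : op H) : bounded_op Z -> adj_rel Z Z -> trivial_kernel Z ->
  bounded_op X -> bounded_op Y -> (forall x, X (Z x) = Y (Z x)) -> X = Y.
Proof.
  intros Zb Zs Zk Xb Yb E. extensionality y. destruct (dense_seq Z Zb Zs Zk y) as [u Hu].
  eapply conv_unique. apply (conv_op X _ _ Xb Hu). eapply conv_ext. 2: apply (conv_op Y _ _ Yb Hu).
  intros n; simpl. auto.
Qed.

Lemma cancel_left {H : Hilbert} (Z X Y : op H) : trivial_kernel Z -> linear_op Z ->
  (forall x, Z (X x) = Z (Y x)) -> X = Y.
Proof.
  intros Zk L E. extensionality y. apply vsub_eq0. apply Zk. rewrite (lin_sub _ _ _ L), E. apply vsub_self.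
Qed.

(* Douglas-type extension *)
Definition dext {H : Hilbert} (Z Q : op H) (y : H) : H :=
  epsilon (inhabits y) (fun l => forall v, converges (fun n => Z (v n)) y -> converges (fun n => Q (v n)) l).

Lemma dext_spec {H : Hilbert} (Z Q : op H) : bounded_op Z -> adj_rel Z Z -> trivial_kernel Z -> linear_op Q ->
  (forall x, norm (Q x) <= norm (Z x)) ->
  forall y v, converges (fun n => Z (v n)) y -> converges (fun n => Q (v n)) (dext Z Q y).
Proof.
  intros Zb Zs Zk QL Qb y. unfold dext.
  apply (epsilon_spec (inhabits y) (fun l => forall v, converges (fun n => Z (v n)) y -> converges (fun n => Q (v n)) l)).
  destruct (dense_seq Z Zb Zs Zk y) as [u Hu].
  assert (Cq : cauchy (fun n => Q (u n))).
  { intros eps He. destruct (conv_cauchy _ _ Hu eps He) as [N HN]. exists N. intros n m Hn Hm.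
    rewrite <- (lin_sub _ _ _ QL). eapply Rle_lt_trans. apply Qb. rewrite (lin_sub _ _ _ (proj1 Zb)). auto. }
  destruct (cauchy_conv _ Cq) as [l Hl]. exists l. intros v Hv eps He.
  destruct (Hl (eps/3)) as [N1 HN1]. lra. destruct (Hu (eps/3)) as [N2 HN2]. lra. destruct (Hv (eps/3)) as [N3 HN3]. lra.
  exists (max N1 (max N2 N3)). intros n Hn. specialize (HN1 n ltac:(lia)). specialize (HN2 n ltac:(lia)). specialize (HN3 n ltac:(lia)).
  fold (vsub (Q (v n)) l). fold (vsub (Q (u n)) l) in HN1. fold (vsub (Z (u n)) y) in HN2. fold (vsub (Z (v n)) y) in HN3.
  eapply Rle_lt_trans. apply (vsub_triangle _ (Q (u n))).
  rewrite <- (lin_sub _ _ _ QL). pose proof (Qb (vsub (v n) (u n))). rewrite (lin_sub _ _ _ (proj1 Zb)) in H0.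
  pose proof (vsub_triangle (Z (v n)) y (Z (u n))). rewrite (norm_sub_sym y) in H1. lra.
Qed.

Lemma dext_prop {H : Hilbert} (Z Q : op H) : bounded_op Z -> adj_rel Z Z -> trivial_kernel Z -> linear_op Q ->
  (forall x, norm (Q x) <= norm (Z x)) ->
  bounded_op (dext Z Q) /\ (forall x, dext Z Q (Z x) = Q x).
Proof.
  intros Zb Zs Zk QL Qb. pose proof (dext_spec Z Q Zb Zs Zk QL Qb) as Sp.
  pose proof (dense_seq Z Zb Zs Zk) as DS. pose proof (proj1 Zb) as ZL.
  split; [split; [split|]|].
  - intros y y'. destruct (DS y) as [u Hu]. destruct (DS y') as [u' Hu'].
    eapply conv_unique. apply (Sp _ (fun n => vadd (u n) (u' n))).
    eapply conv_ext. 2: apply (conv_add _ _ _ _ Hu Hu'). intros; simpl. rewrite (proj1 ZL); auto.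
    eapply conv_ext. 2: apply (conv_add _ _ _ _ (Sp _ _ Hu) (Sp _ _ Hu')). intros; simpl. rewrite (proj1 QL); auto.
  - intros a y. destruct (DS y) as [u Hu].
    eapply conv_unique. apply (Sp _ (fun n => vscal a (u n))).
    eapply conv_ext. 2: apply (conv_scal a _ _ Hu). intros; simpl. rewrite (proj2 ZL); auto.
    eapply conv_ext. 2: apply (conv_scal a _ _ (Sp _ _ Hu)). intros; simpl. rewrite (proj2 QL); auto.
  - exists 1. intros y. destruct (DS y) as [u Hu]. rewrite Rmult_1_l.
    apply (conv_norm_le _ _ _ _ (Sp _ _ Hu) Hu). auto.
  - intros x. eapply conv_unique. apply (Sp _ (fun _ => x)). apply conv_const. apply conv_const.
Qed.

#[export] Instance aeq_Equiv {G} (rel : term G -> term G -> Prop) : Equivalence (aeq rel).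
Proof. split. intros a; apply aeq_refl. intros a b; apply aeq_sym. intros a b c; apply aeq_trans. Qed.
#[export] Instance tAdd_Proper {G} rel : Proper (aeq rel ==> aeq rel ==> aeq rel) (@tAdd G).
Proof. intros a a' Ha b b' Hb. apply aeq_add; auto. Qed.
#[export] Instance tMul_Proper {G} rel : Proper (aeq rel ==> aeq rel ==> aeq rel) (@tMul G).
Proof. intros a a' Ha b b' Hb. apply aeq_mul; auto. Qed.
#[export] Instance tScal_Proper {G} rel c : Proper (aeq rel ==> aeq rel) (@tScal G c).
Proof. intros a a' Ha. apply aeq_scal; auto. Qed.
#[export] Instance tStar_Proper {G} rel : Proper (aeq rel ==> aeq rel) (@tStar G).
Proof. intros a a' Ha. apply aeq_star; auto. Qed.

Definition zs (i : idx) : term idx := tStar (z i).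
Definition pp (i j : idx) : term idx := tMul (zs i) (z j).

Lemma scal_mul_r {G} rel (a b : term G) c : aeq rel (tMul a (tScal c b)) (tScal c (tMul a b)).
Proof. apply ax_scal_mulr. Qed.
Lemma scal_mul_l {G} rel (a b : term G) c : aeq rel (tMul (tScal c a) b) (tScal c (tMul a b)).
Proof. apply ax_scal_mull. Qed.
Lemma scal_scal {G} rel (a : term G) c d : aeq rel (tScal c (tScal d a)) (tScal (Cmul c d) a).
Proof. apply ax_scal_assoc. Qed.
Lemma mul_assoc_r {G} rel (a b c : term G) : aeq rel (tMul (tMul a b) c) (tMul a (tMul b c)).
Proof. symmetry. apply ax_mul_assoc. Qed.
Lemma scal_RR {G} rel (a : term G) r1 r2 : aeq rel (tScal (RtoC r1) (tScal (RtoC r2) a)) (tScal (RtoC (r1 * r2)) a).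
Proof. rewrite scal_scal, Cmul_RtoC. reflexivity. Qed.
Lemma scal_eq {G} rel (a : term G) r1 r2 : r1 = r2 -> aeq rel (tScal (RtoC r1) a) (tScal (RtoC r2) a).
Proof. intros ->. reflexivity. Qed.
Lemma scal_one {G} rel (a : term G) : aeq rel (tScal (RtoC 1) a) a.
Proof. rewrite RtoC_1. apply ax_scal_1. Qed.

Lemma R_comm q i j : idx_lt i j -> aeq (s5rel q) (tMul (z i) (z j)) (tScal (RtoC q) (tMul (z j) (z i))).
Proof. intros. apply aeq_rel. constructor; auto. Qed.
Lemma R_star q i j : i <> j -> aeq (s5rel q) (tMul (zs i) (z j)) (tScal (RtoC q) (tMul (z j) (zs i))).
Proof. intros. apply aeq_rel. constructor; auto. Qed.

Lemma inv_rel {G} rel (a b : term G) q : q <> 0 -> aeq rel a (tScal (RtoC q) b) -> aeq rel b (tScal (RtoC (/ q)) a).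
Proof. intros Hq E. rewrite E, scal_RR. rewrite (scal_eq _ _ _ 1) by (field; auto). rewrite scal_one. reflexivity. Qed.

Lemma R_comm' q i j : q <> 0 -> idx_lt i j -> aeq (s5rel q) (tMul (z j) (z i)) (tScal (RtoC (/ q)) (tMul (z i) (z j))).
Proof. intros. apply inv_rel; auto. apply R_comm; auto. Qed.
Lemma R_star' q i j : q <> 0 -> i <> j -> aeq (s5rel q) (tMul (z j) (zs i)) (tScal (RtoC (/ q)) (tMul (zs i) (z j))).
Proof. intros. apply inv_rel; auto. apply R_star; auto. Qed.
Lemma R_ss q i j : idx_lt i j -> aeq (s5rel q) (tMul (zs j) (zs i)) (tScal (RtoC q) (tMul (zs i) (zs j))).
Proof.
  intros H. unfold zs. rewrite <- ax_star_mul. rewrite (R_comm q i j H). rewrite ax_star_scal, Cconj_RtoC, ax_star_mul.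
  reflexivity.
Qed.
Lemma R_11 q : aeq (s5rel q) (tMul (z I1) (zs I1)) (tMul (zs I1) (z I1)).
Proof. symmetry. apply aeq_rel. constructor. Qed.

Lemma ctx {G} rel (a b c d t : term G) r : aeq rel (tMul a b) (tScal (RtoC r) (tMul c d)) ->
  aeq rel (tMul a (tMul b t)) (tScal (RtoC r) (tMul c (tMul d t))).
Proof. intros E. rewrite ax_mul_assoc, E, scal_mul_l, mul_assoc_r. reflexivity. Qed.
Lemma ctx1 {G} rel (a b c d t : term G) : aeq rel (tMul a b) (tMul c d) ->
  aeq rel (tMul a (tMul b t)) (tMul c (tMul d t)).
Proof. intros E. rewrite ax_mul_assoc, E, mul_assoc_r. reflexivity. Qed.

Lemma both_scal1 {G} rel (a b : term G) : aeq rel (tScal (RtoC 1) a) (tScal (RtoC 1) b) -> aeq rel a b.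
Proof. intros E. rewrite <- (scal_one rel a), <- (scal_one rel b). auto. Qed.

Ltac sw_rule q Hq :=
  first
  [ rewrite scal_mul_r | rewrite scal_mul_l | rewrite scal_RR | rewrite mul_assoc_r
  | rewrite (ctx _ _ _ _ _ _ _ (R_star' q I1 I2 Hq ltac:(discriminate)))
  | rewrite (ctx _ _ _ _ _ _ _ (R_star' q I1 I3 Hq ltac:(discriminate)))
  | rewrite (ctx _ _ _ _ _ _ _ (R_star' q I2 I1 Hq ltac:(discriminate)))
  | rewrite (ctx _ _ _ _ _ _ _ (R_star' q I2 I3 Hq ltac:(discriminate)))
  | rewrite (ctx _ _ _ _ _ _ _ (R_star' q I3 I1 Hq ltac:(discriminate)))
  | rewrite (ctx _ _ _ _ _ _ _ (R_star' q I3 I2 Hq ltac:(discriminate)))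
  | rewrite (ctx1 _ _ _ _ _ _ (R_11 q))
  | rewrite (ctx _ _ _ _ _ _ _ (R_ss q I1 I2 I))
  | rewrite (ctx _ _ _ _ _ _ _ (R_ss q I1 I3 I))
  | rewrite (ctx _ _ _ _ _ _ _ (R_ss q I2 I3 I))
  | rewrite (ctx _ _ _ _ _ _ _ (R_comm' q I1 I2 Hq I))
  | rewrite (ctx _ _ _ _ _ _ _ (R_comm' q I1 I3 Hq I))
  | rewrite (ctx _ _ _ _ _ _ _ (R_comm' q I2 I3 Hq I))
  | rewrite (R_star' q I1 I2 Hq ltac:(discriminate))
  | rewrite (R_star' q I1 I3 Hq ltac:(discriminate))
  | rewrite (R_star' q I2 I1 Hq ltac:(discriminate))
  | rewrite (R_star' q I2 I3 Hq ltac:(discriminate))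
  | rewrite (R_star' q I3 I1 Hq ltac:(discriminate))
  | rewrite (R_star' q I3 I2 Hq ltac:(discriminate))
  | rewrite (R_11 q)
  | rewrite (R_ss q I1 I2 I)
  | rewrite (R_ss q I1 I3 I)
  | rewrite (R_ss q I2 I3 I)
  | rewrite (R_comm' q I1 I2 Hq I)
  | rewrite (R_comm' q I1 I3 Hq I)
  | rewrite (R_comm' q I2 I3 Hq I) ].

Ltac srt q Hq := unfold pp in *; repeat (sw_rule q Hq).

Ltac qsolve q Hq := apply both_scal1; srt q Hq; try (apply scal_eq; field; auto).

Lemma id1 q k : q <> 0 -> k <> I1 ->
  aeq (s5rel q) (tMul (pp I1 I1) (pp k I1)) (tScal (RtoC (/ (q * q))) (tMul (pp k I1) (pp I1 I1))).
Proof. intros Hq Hk. destruct k; [congruence| |]; qsolve q Hq. Qed.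

Lemma id2 q k l : q <> 0 -> k <> I1 -> l <> I1 ->
  aeq (s5rel q) (tMul (pp I1 I1) (pp k l)) (tMul (pp k l) (pp I1 I1)).
Proof. intros Hq Hk Hl. destruct k; [congruence| |]; destruct l; try congruence; qsolve q Hq. Qed.

Lemma id3 q k l : q <> 0 -> k <> I1 -> l <> I1 ->
  aeq (s5rel q) (tMul (pp k l) (pp I1 I1)) (tScal (RtoC (/ (q * q))) (tMul (pp k I1) (pp I1 l))).
Proof. intros Hq Hk Hl. destruct k; [congruence| |]; destruct l; try congruence; qsolve q Hq. Qed.

Lemma id4 q : q <> 0 -> aeq (s5rel q) (tMul (pp I1 I2) (pp I1 I3)) (tScal (RtoC q) (tMul (pp I1 I3) (pp I1 I2))).
Proof. intros Hq. qsolve q Hq. Qed.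
Lemma id5 q : q <> 0 -> aeq (s5rel q) (tMul (pp I2 I1) (pp I1 I3)) (tScal (RtoC (q*q*q)) (tMul (pp I1 I3) (pp I2 I1))).
Proof. intros Hq. qsolve q Hq. Qed.
Lemma id6 q : q <> 0 -> aeq (s5rel q) (tMul (pp I3 I1) (pp I1 I2)) (tScal (RtoC (q*q*q)) (tMul (pp I1 I2) (pp I3 I1))).
Proof. intros Hq. qsolve q Hq. Qed.
Ltac anorm := repeat rewrite mul_assoc_r.

Lemma id9 q : aeq (s5rel q)
  (tAdd (tAdd (tMul (pp I1 I1) (pp I1 I1)) (tMul (pp I1 I2) (pp I2 I1))) (tMul (pp I1 I3) (pp I3 I1)))
  (pp I1 I1).
Proof.
  unfold pp. symmetry.
  transitivity (tMul (zs I1) (tMul tOne (z I1))). rewrite ax_mul_1l. reflexivity.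
  rewrite <- (aeq_rel _ _ _ (s5_sphere q)).
  rewrite !ax_mul_addl, !ax_mul_addr. unfold zs. anorm. reflexivity.
Qed.

Lemma La q k : q <> 0 -> k <> I1 -> forall t,
  aeq (s5rel q) (tMul (z I1) (tMul (z k) (tMul (zs k) t))) (tMul (z k) (tMul (zs k) (tMul (z I1) t))).
Proof.
  intros Hq Hk t. assert (Hlt : idx_lt I1 k) by (destruct k; simpl; auto).
  rewrite (ctx _ _ _ _ _ _ _ (R_comm q I1 k Hlt)). rewrite (ctx _ _ _ _ _ _ _ (R_star' q k I1 Hq Hk)).
  rewrite scal_mul_r, scal_RR. rewrite (scal_eq _ _ _ 1) by (field; auto). apply scal_one.
Qed.

Lemma Lb q k : q <> 0 -> k <> I1 -> forall t,
  aeq (s5rel q) (tMul (z k) (tMul (zs k) (tMul (zs I1) t))) (tMul (zs I1) (tMul (z k) (tMul (zs k) t))).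
Proof.
  intros Hq Hk t. assert (Hlt : idx_lt I1 k) by (destruct k; simpl; auto).
  rewrite (ctx _ _ _ _ _ _ _ (R_ss q I1 k Hlt)). rewrite scal_mul_r.
  rewrite (ctx _ _ _ _ _ _ _ (R_star' q I1 k Hq (not_eq_sym Hk))).
  rewrite scal_RR. rewrite (scal_eq _ _ _ 1) by (field; auto). apply scal_one.
Qed.

Lemma Lc q k : q <> 0 -> k <> I1 ->
  aeq (s5rel q) (tMul (z I1) (tMul (tMul (z k) (zs k)) (zs I1))) (tMul (pp I1 k) (pp k I1)).
Proof.
  intros Hq Hk. unfold pp. anorm. rewrite (La q k Hq Hk). rewrite (R_11 q).
  rewrite (Lb q k Hq Hk). reflexivity.
Qed.

Lemma Ld q k : q <> 0 -> k <> I1 -> aeq (s5rel q) (tMul (pp k I1) (pp I1 k)) (tScal (RtoC (q * q)) (tMul (z I1) (tMul (tMul (zs k) (z k)) (zs I1)))).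
Proof.
  intros Hq Hk. unfold pp. anorm.
  rewrite (ctx _ _ _ _ _ _ _ (R_star q k I1 Hk)). rewrite (R_star q I1 k (not_eq_sym Hk)).
  rewrite !scal_mul_r, scal_RR. apply aeq_scal. reflexivity.
Qed.

Lemma Le q : q <> 0 -> aeq (s5rel q) (tMul (z I1) (tMul (tMul (z I1) (zs I1)) (zs I1))) (tMul (pp I1 I1) (pp I1 I1)).
Proof. intros Hq. qsolve q Hq. Qed.

Lemma id7 q : q <> 0 -> aeq (s5rel q) (tScal (RtoC (/ (q * q))) (tMul (pp I2 I1) (pp I1 I2)))
  (tAdd (tMul (pp I1 I2) (pp I2 I1)) (tScal (RtoC (1 - q * q)) (tMul (pp I1 I1) (pp I1 I1)))).
Proof.
  intros Hq. rewrite (Ld q I2 Hq ltac:(discriminate)). rewrite scal_RR.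
  rewrite (scal_eq _ _ _ 1) by (field; auto). rewrite scal_one.
  rewrite (aeq_rel _ _ _ (s5_c2 q)). fold (zs I1) (zs I2).
  rewrite ax_mul_addl, ax_mul_addr. apply aeq_add. apply Lc; auto; discriminate.
  rewrite scal_mul_l, scal_mul_r. replace (1 - q ^ 2) with (1 - q * q) by ring. apply aeq_scal. apply Le; auto.
Qed.

Lemma id8 q : q <> 0 -> aeq (s5rel q) (tScal (RtoC (/ (q * q))) (tMul (pp I3 I1) (pp I1 I3)))
  (tAdd (tMul (pp I1 I3) (pp I3 I1)) (tScal (RtoC (1 - q * q)) (tAdd (tMul (pp I1 I1) (pp I1 I1)) (tMul (pp I1 I2) (pp I2 I1))))).
Proof.
  intros Hq. rewrite (Ld q I3 Hq ltac:(discriminate)). rewrite scal_RR.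
  rewrite (scal_eq _ _ _ 1) by (field; auto). rewrite scal_one.
  rewrite (aeq_rel _ _ _ (s5_c3 q)). fold (zs I1) (zs I2) (zs I3).
  rewrite ax_mul_addl, ax_mul_addr. apply aeq_add. apply Lc; auto; discriminate.
  rewrite scal_mul_l, scal_mul_r. replace (1 - q ^ 2) with (1 - q * q) by ring. apply aeq_scal.
  rewrite ax_mul_addl, ax_mul_addr. apply aeq_add. apply Le; auto. apply Lc; auto; discriminate.
Qed.

Lemma idstar q i j : aeq (s5rel q) (pp j i) (tStar (pp i j)).
Proof. unfold pp, zs. rewrite ax_star_mul, ax_star_inv. reflexivity. Qed.

Lemma eval_bounded {G} {H : Hilbert} (Z : G -> op H) (t : term G) : (forall g, bounded_op (Z g)) -> bounded_op (eval Z t).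
Proof.
  intros Zb. induction t; simpl.
  - apply Zb.
  - apply bounded_zero.
  - apply bounded_id.
  - apply bounded_add; auto.
  - apply (bounded_comp (eval Z t1) (eval Z t2)); auto.
  - apply bounded_scal; auto.
  - apply adjoint_bounded; auto.
Qed.

Lemma adjoint_add {H : Hilbert} (T S : op H) : bounded_op T -> bounded_op S ->
  adjoint (fun x => vadd (T x) (S x)) = (fun x => vadd (adjoint T x) (adjoint S x)).
Proof. intros. apply adjoint_eq. apply adj_rel_add; apply adjoint_rel; auto. Qed.
Lemma adjoint_comp {H : Hilbert} (T S : op H) : bounded_op T -> bounded_op S ->
  adjoint (fun x => T (S x)) = (fun x => adjoint S (adjoint T x)).
Proof. intros. apply adjoint_eq. apply (adj_rel_comp T S); apply adjoint_rel; auto. Qed.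
Lemma adjoint_scal {H : Hilbert} (a : C) (T : op H) : bounded_op T ->
  adjoint (fun x => vscal a (T x)) = (fun x => vscal (Cconj a) (adjoint T x)).
Proof. intros. apply adjoint_eq. apply adj_rel_scal; apply adjoint_rel; auto. Qed.
Lemma adjoint_id {H : Hilbert} : adjoint (fun x : H => x) = (fun x => x).
Proof. apply adjoint_eq. apply adj_rel_id. Qed.

Lemma eval_aeq {G} {H : Hilbert} (rel : term G -> term G -> Prop) (Z : G -> op H) :
  (forall g, bounded_op (Z g)) -> (forall a b, rel a b -> eval Z a = eval Z b) ->
  forall a b, aeq rel a b -> eval Z a = eval Z b.
Proof.
  intros Zb Zr a b E. pose proof (fun t => eval_bounded Z t Zb) as EB.
  induction E; simpl.
  - apply Zr; auto.
  - auto.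
  - auto.
  - congruence.
  - rewrite IHE1, IHE2; auto.
  - rewrite IHE1, IHE2; auto.
  - rewrite IHE; auto.
  - rewrite IHE; auto.
  - extensionality x. apply vadd_assoc.
  - extensionality x. apply vadd_comm.
  - extensionality x. apply vadd_0.
  - extensionality x. rewrite <- vopp_scal. apply vadd_opp.
  - auto.
  - auto.
  - auto.
  - auto.
  - extensionality x. apply (proj1 (proj1 (EB a))).
  - extensionality x. apply vscal_1.
  - extensionality x. apply vscal_assoc.
  - extensionality x. apply vscal_distr_v.
  - extensionality x. apply vscal_distr_c.
  - auto.
  - extensionality x. apply (proj2 (proj1 (EB a))).
  - rewrite adjoint_adjoint; auto.
  - rewrite adjoint_add; auto.
  - rewrite (adjoint_comp (eval Z a) (eval Z b)); auto.
  - rewrite adjoint_scal; auto.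
  - rewrite adjoint_id; auto.
Qed.

Definition pg (i j : idx) : term (idx * idx) := tGen (i, j).

Lemma Pw_use q H P (hP : CP2_rep q H P) f g : aeq (s5rel q) (cp2_emb f) (cp2_emb g) -> eval (pvals P) f = eval (pvals P) g.
Proof. apply hP. Qed.

Lemma P_adj q H P (hP : CP2_rep q H P) i j : adj_rel (P i j) (P j i).
Proof.
  pose proof (Pw_use q H P hP (pg j i) (tStar (pg i j)) (idstar q i j)) as E. simpl in E. unfold pvals in E; simpl in E.
  rewrite E. apply adjoint_rel. apply hP.
Qed.

Lemma P_id9 q H P (hP : CP2_rep q H P) x :
  P I1 I1 x = vadd (vadd (P I1 I1 (P I1 I1 x)) (P I1 I2 (P I2 I1 x))) (P I1 I3 (P I3 I1 x)).
Proof.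
  pose proof (Pw_use q H P hP (tAdd (tAdd (tMul (pg I1 I1) (pg I1 I1)) (tMul (pg I1 I2) (pg I2 I1))) (tMul (pg I1 I3) (pg I3 I1))) (pg I1 I1) (id9 q)) as E.
  simpl in E. unfold pvals in E; simpl in E. exact (eq_sym (f_equal (fun F => F x) E)).
Qed.

Lemma P11_form q H P (hP : CP2_rep q H P) x :
  Re (inner (P I1 I1 x) x) = nsq (P I1 I1 x) + nsq (P I2 I1 x) + nsq (P I3 I1 x).
Proof.
  rewrite (P_id9 q H P hP x) at 1. rewrite !inner_add_l.
  rewrite (P_adj q H P hP I1 I1 (P I1 I1 x) x), (P_adj q H P hP I1 I2 (P I2 I1 x) x), (P_adj q H P hP I1 I3 (P I3 I1 x) x).
  rewrite (inner_sym (P I1 I1 x)), (inner_sym (P I2 I1 x)), (inner_sym (P I3 I1 x)). simpl. unfold nsq. ring.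
Qed.

Lemma P11_pos q H P (hP : CP2_rep q H P) : posop (P I1 I1).
Proof.
  split; [apply hP|split]. apply (P_adj q H P hP).
  intros x. rewrite (P11_form q H P hP). pose proof (nsq_nonneg (P I1 I1 x)). pose proof (nsq_nonneg (P I2 I1 x)).
  pose proof (nsq_nonneg (P I3 I1 x)). lra.
Qed.

Ltac use_id q H P hP f g L x :=
  let E := fresh "E" in
  pose proof (Pw_use q H P hP f g L) as E; simpl in E; unfold pvals in E; simpl in E;
  exact (f_equal (fun F => F x) E).

Lemma R1 q H P (hP : CP2_rep q H P) k x : q <> 0 -> k <> I1 ->
  P I1 I1 (P k I1 x) = vscal (RtoC (/ (q * q))) (P k I1 (P I1 I1 x)).
Proof. intros Hq Hk. use_id q H P hP (tMul (pg I1 I1) (pg k I1)) (tScal (RtoC (/ (q * q))) (tMul (pg k I1) (pg I1 I1))) (id1 q k Hq Hk) x. Qed.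

Lemma R2 q H P (hP : CP2_rep q H P) k l x : q <> 0 -> k <> I1 -> l <> I1 ->
  P I1 I1 (P k l x) = P k l (P I1 I1 x).
Proof. intros Hq Hk Hl. use_id q H P hP (tMul (pg I1 I1) (pg k l)) (tMul (pg k l) (pg I1 I1)) (id2 q k l Hq Hk Hl) x. Qed.

Lemma R3 q H P (hP : CP2_rep q H P) k l x : q <> 0 -> k <> I1 -> l <> I1 ->
  P k l (P I1 I1 x) = vscal (RtoC (/ (q * q))) (P k I1 (P I1 l x)).
Proof. intros Hq Hk Hl. use_id q H P hP (tMul (pg k l) (pg I1 I1)) (tScal (RtoC (/ (q * q))) (tMul (pg k I1) (pg I1 l))) (id3 q k l Hq Hk Hl) x. Qed.

Lemma R4 q H P (hP : CP2_rep q H P) x : q <> 0 ->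
  P I1 I2 (P I1 I3 x) = vscal (RtoC q) (P I1 I3 (P I1 I2 x)).
Proof. intros Hq. use_id q H P hP (tMul (pg I1 I2) (pg I1 I3)) (tScal (RtoC q) (tMul (pg I1 I3) (pg I1 I2))) (id4 q Hq) x. Qed.

Lemma R5 q H P (hP : CP2_rep q H P) x : q <> 0 ->
  P I2 I1 (P I1 I3 x) = vscal (RtoC (q*q*q)) (P I1 I3 (P I2 I1 x)).
Proof. intros Hq. use_id q H P hP (tMul (pg I2 I1) (pg I1 I3)) (tScal (RtoC (q*q*q)) (tMul (pg I1 I3) (pg I2 I1))) (id5 q Hq) x. Qed.

Lemma R6 q H P (hP : CP2_rep q H P) x : q <> 0 ->
  P I3 I1 (P I1 I2 x) = vscal (RtoC (q*q*q)) (P I1 I2 (P I3 I1 x)).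
Proof. intros Hq. use_id q H P hP (tMul (pg I3 I1) (pg I1 I2)) (tScal (RtoC (q*q*q)) (tMul (pg I1 I2) (pg I3 I1))) (id6 q Hq) x. Qed.

Lemma R7 q H P (hP : CP2_rep q H P) x : q <> 0 ->
  vscal (RtoC (/ (q * q))) (P I2 I1 (P I1 I2 x)) = vadd (P I1 I2 (P I2 I1 x)) (vscal (RtoC (1 - q * q)) (P I1 I1 (P I1 I1 x))).
Proof.
  intros Hq. use_id q H P hP (tScal (RtoC (/ (q * q))) (tMul (pg I2 I1) (pg I1 I2)))
    (tAdd (tMul (pg I1 I2) (pg I2 I1)) (tScal (RtoC (1 - q * q)) (tMul (pg I1 I1) (pg I1 I1)))) (id7 q Hq) x.
Qed.

Lemma R8 q H P (hP : CP2_rep q H P) x : q <> 0 ->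
  vscal (RtoC (/ (q * q))) (P I3 I1 (P I1 I3 x)) =
  vadd (P I1 I3 (P I3 I1 x)) (vscal (RtoC (1 - q * q)) (vadd (P I1 I1 (P I1 I1 x)) (P I1 I2 (P I2 I1 x)))).
Proof.
  intros Hq. use_id q H P hP (tScal (RtoC (/ (q * q))) (tMul (pg I3 I1) (pg I1 I3)))
    (tAdd (tMul (pg I1 I3) (pg I3 I1)) (tScal (RtoC (1 - q * q)) (tAdd (tMul (pg I1 I1) (pg I1 I1)) (tMul (pg I1 I2) (pg I2 I1))))) (id8 q Hq) x.
Qed.

Lemma Z1_exists q H P (hq : 0 < q < 1) (hP : CP2_rep q H P) : exists Z1 : op H,
  posop Z1 /\ (forall x, Z1 (Z1 x) = P I1 I1 x) /\
  (forall Y, bounded_op Y -> (forall x, P I1 I1 (Y x) = vscal (RtoC (/ (q * q))) (Y (P I1 I1 x))) ->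
     forall x, Z1 (Y x) = vscal (RtoC (/ q)) (Y (Z1 x))) /\
  (forall Y, bounded_op Y -> (forall x, P I1 I1 (Y x) = Y (P I1 I1 x)) -> forall x, Z1 (Y x) = Y (Z1 x)).
Proof.
  pose proof (P11_pos q H P hP) as PA. set (A := P I1 I1) in *.
  destruct (bounded_bound A (proj1 PA)) as [M [HM HbM]].
  assert (HAM : forall x, Re (inner (A x) x) <= M * nsq x).
  { intros x. pose proof (rip_le_norm (A x) x). apply abs_le_inv in H0. unfold rip in H0.
    rewrite <- norm_sq. pose proof (HbM x). pose proof (norm_nonneg x). nra. }
  assert (Hq0 : q <> 0) by lra.
  set (c := (M + 1) / (q * q)).
  assert (Hc : M + 1 <= c).
  { unfold c. apply (Rmult_le_reg_r (q * q)). nra. unfold Rdiv. rewrite Rmult_assoc, Rinv_l, Rmult_1_r by nra. assert (q * q <= 1) by nra. nra. }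
  assert (SA : sqrt_hyp A c).
  { split; auto. split. lra. intros x. pose proof (HAM x). pose proof (nsq_nonneg x). nra. }
  set (A' := fun x => vscal (RtoC (/ (q * q))) (A x)).
  assert (Hqq : 0 < / (q * q)) by (apply Rinv_0_lt_compat; nra).
  assert (Hqq1 : / (q * q) * M <= c). { unfold c. unfold Rdiv. rewrite Rmult_comm. apply Rmult_le_compat_r; lra. }
  assert (SA' : sqrt_hyp A' c).
  { destruct PA as [Ab [As Ap]]. split; [split; [|split]|split].
    - apply bounded_scal; auto.
    - unfold A'. pose proof (adj_rel_scal (RtoC (/ (q * q))) A A As). rewrite Cconj_RtoC in H0. exact H0.
    - intros x. unfold A'. rewrite inner_scal_l. simpl. rewrite Rmult_0_l, Rminus_0_r. apply Rmult_le_pos; auto. lra.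
    - lra.
    - intros x. unfold A'. rewrite inner_scal_l. simpl. rewrite Rmult_0_l, Rminus_0_r.
      pose proof (HAM x). pose proof (nsq_nonneg x). pose proof (Ap x).
      apply Rle_trans with (/ (q * q) * (M * nsq x)). apply Rmult_le_compat_l; lra.
      rewrite <- Rmult_assoc. apply Rmult_le_compat_r; lra. }
  set (Z1 := Wop A c).
  pose proof (Wop_pos A c SA) as PZ. fold Z1 in PZ.
  set (R := fun x => vscal (RtoC (/ q)) (Z1 x)).
  assert (Hq1 : 0 < / q) by (apply Rinv_0_lt_compat; lra).
  assert (PR : posop R).
  { destruct PZ as [Zb [Zs Zp]]. split; [|split].
    - apply bounded_scal; auto.
    - unfold R. pose proof (adj_rel_scal (RtoC (/ q)) Z1 Z1 Zs). rewrite Cconj_RtoC in H0. exact H0.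
    - intros x. unfold R. rewrite inner_scal_l. simpl. rewrite Rmult_0_l, Rminus_0_r. apply Rmult_le_pos; auto. lra. }
  assert (RR : forall x, R (R x) = A' x).
  { intros x. unfold R, A'. rewrite (proj2 (proj1 (proj1 PZ))), vscal_assoc, Cmul_RtoC.
    unfold Z1. rewrite Wop_sq by auto. f_equal. f_equal. field. auto. }
  assert (WA' : Wop A' c = R) by (symmetry; apply Wop_unique; auto).
  exists Z1. split; [auto|split; [|split]].
  - intros x. apply Wop_sq; auto.
  - intros Y Yb HY x. transitivity (Y (Wop A' c x)).
    + symmetry. apply Wop_inter; auto. intros y. unfold A'. rewrite (proj2 (proj1 Yb)). symmetry. apply HY.
    + rewrite WA'. unfold R. apply (proj2 (proj1 Yb)).
  - intros Y Yb HY x. symmetry. apply Wop_inter; auto. all: intros y; symmetry; apply HY.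
Qed.

Definition base_props q (H : Hilbert) (P : idx -> idx -> op H) (Z1 : op H) : Prop :=
  (0 < q < 1) /\ CP2_rep q H P /\ posop Z1 /\ trivial_kernel Z1 /\ (forall x, Z1 (Z1 x) = P I1 I1 x) /\
  (forall Y, bounded_op Y -> (forall x, P I1 I1 (Y x) = vscal (RtoC (/ (q * q))) (Y (P I1 I1 x))) ->
     forall x, Z1 (Y x) = vscal (RtoC (/ q)) (Y (Z1 x))) /\
  (forall Y, bounded_op Y -> (forall x, P I1 I1 (Y x) = Y (P I1 I1 x)) -> forall x, Z1 (Y x) = Y (Z1 x)).

Definition dk_props {H : Hilbert} (P : idx -> idx -> op H) (Z1 : op H) k (D : op H) : Prop :=
  bounded_op D /\ forall x, D (Z1 x) = P k I1 x.

Lemma sandwich {H : Hilbert} (Z1 X Y : op H) : posop Z1 -> trivial_kernel Z1 -> bounded_op X -> bounded_op Y ->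
  (forall x, Z1 (X (Z1 x)) = Z1 (Y (Z1 x))) -> X = Y.
Proof.
  intros [Zb [Zs _]] Zk Xb Yb E.
  assert (E2 : (fun x => X (Z1 x)) = (fun x => Y (Z1 x))) by (apply (cancel_left Z1); auto; apply Zb).
  apply (cancel_right Z1); auto. intros x. exact (f_equal (fun F => F x) E2).
Qed.

Lemma k_facts q H P Z1 k D : base_props q H P Z1 -> k <> I1 -> dk_props P Z1 k D ->
  (forall x, Z1 (adjoint D x) = P I1 k x) /\
  (forall y, Z1 (D y) = vscal (RtoC (/ q)) (D (Z1 y))) /\
  (forall y, adjoint D (Z1 y) = vscal (RtoC (/ q)) (Z1 (adjoint D y))).
Proof.
  intros [hq [hP [PZ [Zk [ZZ [D1 D2]]]]]] Hk [Db DZ]. pose proof PZ as [Zb [Zs Zp]].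
  assert (Hq : q <> 0) by lra.
  assert (A : (fun x => Z1 (adjoint D x)) = P I1 k).
  { apply (adj_rel_unique (fun x => D (Z1 x))).
    apply (adj_rel_comp D Z1). apply adjoint_rel; auto. auto.
    replace (fun x => D (Z1 x)) with (P k I1) by (extensionality x; auto). apply (P_adj q H P hP). }
  assert (B : (fun y => Z1 (D y)) = (fun y => vscal (RtoC (/ q)) (D (Z1 y)))).
  { apply (cancel_right Z1); auto.
    - apply (bounded_comp Z1 D); auto.
    - apply (bounded_scal _ (fun y => D (Z1 y))). apply (bounded_comp D Z1); auto.
    - intros x. rewrite DZ, DZ. apply D1. apply hP. intros y. apply (R1 q H P hP); auto. }
  split; [|split].
  - intros x. exact (f_equal (fun F => F x) A).
  - intros y. exact (f_equal (fun F => F y) B).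
  - assert (C : (fun y => adjoint D (Z1 y)) = (fun y => vscal (RtoC (/ q)) (Z1 (adjoint D y)))).
    { apply (adj_rel_unique (fun y => Z1 (D y))).
      apply (adj_rel_comp Z1 D). auto. apply adjoint_rel; auto.
      rewrite B. pose proof (adj_rel_scal (RtoC (/ q)) _ _ (adj_rel_comp D Z1 (adjoint D) Z1 (adjoint_rel D Db) Zs)) as E.
      rewrite Cconj_RtoC in E. exact E. }
    intros y. exact (f_equal (fun F => F y) C).
Qed.

Lemma inj_Z {H : Hilbert} (Z : op H) a b : trivial_kernel Z -> linear_op Z -> Z a = Z b -> a = b.
Proof. intros Zk L E. apply vsub_eq0. apply Zk. rewrite (lin_sub _ _ _ L), E. apply vsub_self. Qed.

Lemma kl_fact q H P Z1 k l Dk Dl : base_props q H P Z1 -> k <> I1 -> l <> I1 ->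
  dk_props P Z1 k Dk -> dk_props P Z1 l Dl -> forall x, Dk (adjoint Dl x) = P k l x.
Proof.
  intros BP Hk Hl DPk DPl.
  destruct (k_facts q H P Z1 k Dk BP Hk DPk) as [Ak [Bk Ck]].
  destruct (k_facts q H P Z1 l Dl BP Hl DPl) as [Al [Bl Cl]].
  destruct BP as [hq [hP [PZ [Zk [ZZ [D1 D2]]]]]]. pose proof PZ as [Zb [Zs Zp]].
  destruct DPk as [Dkb DkZ]. destruct DPl as [Dlb DlZ].
  assert (Hq : q <> 0) by lra.
  assert (E : (fun x => Dk (adjoint Dl x)) = P k l).
  { apply (cancel_right Z1); auto.
    - apply (bounded_comp Dk (adjoint Dl)); auto. apply adjoint_bounded; auto.
    - apply hP.
    - intros x. apply (inj_Z Z1); auto. apply Zb.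
      rewrite Cl, Al. rewrite (proj2 (proj1 Dkb)), (proj2 (proj1 Zb)), Bk, DkZ.
      rewrite (D2 (P k l)), ZZ, (R3 q H P hP) by (auto; apply hP || (intros; apply (R2 q H P hP); auto)).
      rewrite vscal_assoc, Cmul_RtoC. f_equal. f_equal. field. auto. }
  intros x. exact (f_equal (fun F => F x) E).
Qed.

Ltac veqf Hq := apply inner_ext_r; intro; vexp; apply C_ext; simpl; field; auto.

Lemma R7' q H P (hP : CP2_rep q H P) x : q <> 0 ->
  P I2 I1 (P I1 I2 x) = vscal (RtoC (q * q)) (vadd (P I1 I2 (P I2 I1 x)) (vscal (RtoC (1 - q * q)) (P I1 I1 (P I1 I1 x)))).
Proof.
  intros Hq. rewrite <- (R7 q H P hP x Hq). rewrite vscal_assoc, Cmul_RtoC.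
  replace (q * q * / (q * q)) with 1 by (field; auto). rewrite RtoC_1, vscal_1. auto.
Qed.

Lemma R8' q H P (hP : CP2_rep q H P) x : q <> 0 ->
  P I3 I1 (P I1 I3 x) = vscal (RtoC (q * q)) (vadd (P I1 I3 (P I3 I1 x)) (vscal (RtoC (1 - q * q)) (vadd (P I1 I1 (P I1 I1 x)) (P I1 I2 (P I2 I1 x))))).
Proof.
  intros Hq. rewrite <- (R8 q H P hP x Hq). rewrite vscal_assoc, Cmul_RtoC.
  replace (q * q * / (q * q)) with 1 by (field; auto). rewrite RtoC_1, vscal_1. auto.
Qed.

Ltac prw sZ1 sZ2 sZ3 sE2 sE3 aZ1 aZ2 aZ3 aE2 aE3 ZZ A2 A3 F2 F3 G2 G3 DZ2 DZ3 sP aP :=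
  repeat first [rewrite sZ1 | rewrite sZ2 | rewrite sZ3 | rewrite sE2 | rewrite sE3 | rewrite sP | rewrite aP
    | rewrite aZ1 | rewrite aZ2 | rewrite aZ3 | rewrite aE2 | rewrite aE3 | rewrite ZZ
    | rewrite A2 | rewrite A3 | rewrite F2 | rewrite F3 | rewrite G2 | rewrite G3 | rewrite DZ2 | rewrite DZ3].

Theorem lemmaD1 (q : R) (hq : 0 < q < 1) (H : Hilbert) (P : idx -> idx -> op H)
  (hP : CP2_rep q H P) (hker : trivial_kernel (P I1 I1)) :
  exists Z : idx -> op H,
    (forall i, bounded_op (Z i)) /\
    positive_op (Z I1) /\ trivial_kernel (Z I1) /\
    (P I1 I1 = ocomp (Z I1) (Z I1) /\
     P I1 I2 = qscal q (ocomp (Z I2) (Z I1)) /\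
     P I1 I3 = qscal q (ocomp (Z I3) (Z I1)) /\
     P I2 I1 = qscal q (ocomp (Z I1) (adjoint (Z I2))) /\
     P I2 I2 = ocomp (adjoint (Z I2)) (Z I2) /\
     P I2 I3 = ocomp (adjoint (Z I2)) (Z I3) /\
     P I3 I1 = qscal q (ocomp (Z I1) (adjoint (Z I3))) /\
     P I3 I2 = ocomp (adjoint (Z I3)) (Z I2) /\
     P I3 I3 = ocomp (adjoint (Z I3)) (Z I3)) /\
    S5_rep q H Z /\
    (forall i j, eval Z (tMul (tStar (z i)) (z j)) = P i j) /\
    (CP2_irreducible P -> S5_irreducible Z).
Proof.
  assert (Hq : q <> 0) by lra.
  destruct (Z1_exists q H P hq hP) as [Z1 [PZ [ZZ [D1 D2]]]].
  pose proof PZ as [Z1b [Z1s Z1p]].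
  assert (Zk : trivial_kernel Z1).
  { intros x E. apply hker. rewrite <- ZZ, E. apply lin_zero, Z1b. }
  assert (BP : base_props q H P Z1) by exact (conj hq (conj hP (conj PZ (conj Zk (conj ZZ (conj D1 D2)))))).
  assert (Hbd : forall k x, norm (P k I1 x) <= norm (Z1 x)).
  { intros k x. apply norm_le_of_sq. apply norm_nonneg. rewrite norm_sq.
    assert (E : nsq (Z1 x) = Re (inner (P I1 I1 x) x)).
    { rewrite <- ZZ, Z1s. reflexivity. }
    rewrite E, (P11_form q H P hP). pose proof (nsq_nonneg (P I1 I1 x)). pose proof (nsq_nonneg (P I2 I1 x)).
    pose proof (nsq_nonneg (P I3 I1 x)). destruct k; lra. }
  destruct (dext_prop Z1 (P I2 I1) Z1b Z1s Zk (proj1 (proj1 hP I2 I1)) (Hbd I2)) as [Db2 DZ2].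
  destruct (dext_prop Z1 (P I3 I1) Z1b Z1s Zk (proj1 (proj1 hP I3 I1)) (Hbd I3)) as [Db3 DZ3].
  set (E2 := dext Z1 (P I2 I1)) in *. set (E3 := dext Z1 (P I3 I1)) in *.
  assert (DP2 : dk_props P Z1 I2 E2) by (split; auto).
  assert (DP3 : dk_props P Z1 I3 E3) by (split; auto).
  destruct (k_facts q H P Z1 I2 E2 BP ltac:(discriminate) DP2) as [A2 [B2 C2]].
  destruct (k_facts q H P Z1 I3 E3 BP ltac:(discriminate) DP3) as [A3 [B3 C3]].
  pose proof (kl_fact q H P Z1 I2 I2 E2 E2 BP ltac:(discriminate) ltac:(discriminate) DP2 DP2) as K22.
  pose proof (kl_fact q H P Z1 I2 I3 E2 E3 BP ltac:(discriminate) ltac:(discriminate) DP2 DP3) as K23.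
  pose proof (kl_fact q H P Z1 I3 I2 E3 E2 BP ltac:(discriminate) ltac:(discriminate) DP3 DP2) as K32.
  pose proof (kl_fact q H P Z1 I3 I3 E3 E3 BP ltac:(discriminate) ltac:(discriminate) DP3 DP3) as K33.
  set (Z2 := adjoint E2) in *. set (Z3 := adjoint E3) in *.
  assert (Z2b : bounded_op Z2) by (apply adjoint_bounded; auto).
  assert (Z3b : bounded_op Z3) by (apply adjoint_bounded; auto).
  assert (adjZ1 : adjoint Z1 = Z1) by (apply adjoint_eq; auto).
  assert (adjZ2 : adjoint Z2 = E2) by (apply adjoint_adjoint; auto).
  assert (adjZ3 : adjoint Z3 = E3) by (apply adjoint_adjoint; auto).
  set (Z := fun i => match i with I1 => Z1 | I2 => Z2 | I3 => Z3 end).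
  assert (F2 : forall x, Z2 (Z1 x) = vscal (RtoC (/ q)) (P I1 I2 x)) by (intros; rewrite C2, A2; auto).
  assert (F3 : forall x, Z3 (Z1 x) = vscal (RtoC (/ q)) (P I1 I3 x)) by (intros; rewrite C3, A3; auto).
  assert (G2 : forall x, Z1 (E2 x) = vscal (RtoC (/ q)) (P I2 I1 x)) by (intros; rewrite B2, DZ2; auto).
  assert (G3 : forall x, Z1 (E3 x) = vscal (RtoC (/ q)) (P I3 I1 x)) by (intros; rewrite B3, DZ3; auto).
  assert (Zb : forall i, bounded_op (Z i)) by (intros []; simpl; auto).
  pose proof (fun i j => proj1 hP i j) as Pb.
  pose proof (proj2 (proj1 Z1b)) as sZ1. pose proof (proj2 (proj1 Z2b)) as sZ2. pose proof (proj2 (proj1 Z3b)) as sZ3.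
  pose proof (proj2 (proj1 Db2)) as sE2. pose proof (proj2 (proj1 Db3)) as sE3.
  pose proof (proj1 (proj1 Z1b)) as aZ1. pose proof (proj1 (proj1 Z2b)) as aZ2. pose proof (proj1 (proj1 Z3b)) as aZ3.
  pose proof (proj1 (proj1 Db2)) as aE2. pose proof (proj1 (proj1 Db3)) as aE3.
  assert (sP : forall i j a x, P i j (vscal a x) = vscal a (P i j x)) by (intros; apply (proj2 (proj1 (Pb i j)))).
  assert (aP : forall i j x y, P i j (vadd x y) = vadd (P i j x) (P i j y)) by (intros; apply (proj1 (proj1 (Pb i j)))).
  assert (Zr : forall a b, s5rel q a b -> eval Z a = eval Z b).
  { intros a b Hr. pose proof (eval_bounded Z a Zb) as Ba. pose proof (eval_bounded Z b Zb) as Bb.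
    destruct Hr as [i j Hij|i j Hij| | | | ].
    - destruct i, j; simpl in Hij; try contradiction; simpl in *.
      + extensionality x. prw sZ1 sZ2 sZ3 sE2 sE3 aZ1 aZ2 aZ3 aE2 aE3 ZZ A2 A3 F2 F3 G2 G3 DZ2 DZ3 sP aP. veqf Hq.
      + extensionality x. prw sZ1 sZ2 sZ3 sE2 sE3 aZ1 aZ2 aZ3 aE2 aE3 ZZ A2 A3 F2 F3 G2 G3 DZ2 DZ3 sP aP. veqf Hq.
      + apply (sandwich Z1); auto. intros x. prw sZ1 sZ2 sZ3 sE2 sE3 aZ1 aZ2 aZ3 aE2 aE3 ZZ A2 A3 F2 F3 G2 G3 DZ2 DZ3 sP aP. rewrite (R4 q H P hP) by auto. veqf Hq.
    - destruct i, j; try congruence; simpl in *; rewrite ?adjZ1, ?adjZ2, ?adjZ3 in *.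
      + extensionality x. prw sZ1 sZ2 sZ3 sE2 sE3 aZ1 aZ2 aZ3 aE2 aE3 ZZ A2 A3 F2 F3 G2 G3 DZ2 DZ3 sP aP. veqf Hq.
      + extensionality x. prw sZ1 sZ2 sZ3 sE2 sE3 aZ1 aZ2 aZ3 aE2 aE3 ZZ A2 A3 F2 F3 G2 G3 DZ2 DZ3 sP aP. veqf Hq.
      + extensionality x. prw sZ1 sZ2 sZ3 sE2 sE3 aZ1 aZ2 aZ3 aE2 aE3 ZZ A2 A3 F2 F3 G2 G3 DZ2 DZ3 sP aP. veqf Hq.
      + apply (sandwich Z1); auto. intros x. prw sZ1 sZ2 sZ3 sE2 sE3 aZ1 aZ2 aZ3 aE2 aE3 ZZ A2 A3 F2 F3 G2 G3 DZ2 DZ3 sP aP. rewrite (R5 q H P hP) by auto. veqf Hq.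
      + extensionality x. prw sZ1 sZ2 sZ3 sE2 sE3 aZ1 aZ2 aZ3 aE2 aE3 ZZ A2 A3 F2 F3 G2 G3 DZ2 DZ3 sP aP. veqf Hq.
      + apply (sandwich Z1); auto. intros x. prw sZ1 sZ2 sZ3 sE2 sE3 aZ1 aZ2 aZ3 aE2 aE3 ZZ A2 A3 F2 F3 G2 G3 DZ2 DZ3 sP aP. rewrite (R6 q H P hP) by auto. veqf Hq.
    - simpl. rewrite adjZ1. auto.
    - simpl in *. rewrite ?adjZ1, ?adjZ2 in *. apply (sandwich Z1); auto. intros x.
      prw sZ1 sZ2 sZ3 sE2 sE3 aZ1 aZ2 aZ3 aE2 aE3 ZZ A2 A3 F2 F3 G2 G3 DZ2 DZ3 sP aP.
      rewrite (R7' q H P hP) by auto. veqf Hq.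
    - simpl in *. rewrite ?adjZ1, ?adjZ2, ?adjZ3 in *. apply (sandwich Z1); auto. intros x.
      prw sZ1 sZ2 sZ3 sE2 sE3 aZ1 aZ2 aZ3 aE2 aE3 ZZ A2 A3 F2 F3 G2 G3 DZ2 DZ3 sP aP.
      rewrite (R8' q H P hP) by auto. veqf Hq.
    - simpl in *. rewrite ?adjZ1, ?adjZ2, ?adjZ3 in *. apply (sandwich Z1); auto. intros x.
      prw sZ1 sZ2 sZ3 sE2 sE3 aZ1 aZ2 aZ3 aE2 aE3 ZZ A2 A3 F2 F3 G2 G3 DZ2 DZ3 sP aP.
      symmetry. apply (P_id9 q H P hP). }
  assert (EZ : forall i j, eval Z (tMul (tStar (z i)) (z j)) = P i j).
  { intros [] []; simpl; rewrite ?adjZ1, ?adjZ2, ?adjZ3; extensionality x;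
    prw sZ1 sZ2 sZ3 sE2 sE3 aZ1 aZ2 aZ3 aE2 aE3 ZZ A2 A3 F2 F3 G2 G3 DZ2 DZ3 sP aP;
    rewrite ?K22, ?K23, ?K32, ?K33; auto. }
  assert (ECP : forall f, eval Z (cp2_emb f) = eval (pvals P) f).
  { induction f; simpl.
    - destruct g as [i j]. apply EZ.
    - auto.
    - auto.
    - rewrite IHf1, IHf2. auto.
    - rewrite IHf1, IHf2. auto.
    - rewrite IHf. auto.
    - rewrite IHf. auto. }
  exists Z. split; [exact Zb|]. split; [split; simpl; auto|]. split; [simpl; exact Zk|].
  split.
  { unfold ocomp, qscal; simpl; rewrite ?adjZ2, ?adjZ3.
    repeat split; extensionality x;
    prw sZ1 sZ2 sZ3 sE2 sE3 aZ1 aZ2 aZ3 aE2 aE3 ZZ A2 A3 F2 F3 G2 G3 DZ2 DZ3 sP aP;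
    rewrite ?K22, ?K23, ?K32, ?K33; try reflexivity; veqf Hq. }
  split; [split; [exact Zb| apply eval_aeq; auto]|].
  split; [exact EZ|].
  intros [Hne Hirr]. split; auto. intros M CM Hinv. apply Hirr; auto.
  intros T x [f ->] Mx. apply Hinv; auto. exists (cp2_emb f). symmetry. apply ECP.
Qed.
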